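(* Let $P$ be a planar cyclic polygon with positive edge lengths $l_1,\dots,l_n$ such that (1) no two consecutive vertices are antipodal with respect to the circumscribed circle, and (2) $P$ does not lie on a straight line. Then $P$ is a nondegenerate (Morse) critical point of the oriented area $\mathcal A$ on $\mathbf L(l_1,\dots,l_n)$ if and only if $P$ is not a bifurcating polygon, i.e. iff $\sum_{i=1}^n\varepsilon_i\tan\alpha_i\neq0$.
   Context: $\mathbf L(l_1,\dots,l_n)$ is the space of planar polygons (closed broken lines with cyclically numbered vertices $v_1,\dots,v_n$) with $|v_iv_{i+1}|=l_i$, modulo translations and rotations. The oriented area is $\mathcal A=\frac12\sum_i(x_iy_{i+1}-x_{i+1}y_i)$ for $v_i=(x_i,y_i)$. A polygon is cyclic if all vertices lie on a circle with center $O$. $\alpha_i$ is half of the unoriented positive angle between $\overrightarrow{Ov_i}$ and $\overrightarrow{Ov_{i+1}}$; $\varepsilon_i=1$ if $O$ lies to the left of $\overrightarrow{v_iv_{i+1}}$ and $-1$ if to the right. $P$ is bifurcating if $\sum_{i=1}^n\varepsilon_i\tan\alpha_i=0$. *)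

(* Defs.v *)
From Stdlib Require Import Reals Lra.
Open Scope R_scope.

Fixpoint rsum (n : nat) (f : nat -> R) : R :=
  match n with O => 0 | S k => rsum k f + f k end.

(** Polygons with n cyclically numbered vertices v_0, ..., v_{n-1} in R^2
    (values at indices >= n are irrelevant). *)
Definition config := nat -> (R * R).

Definition next (n i : nat) : nat := Nat.modulo (S i) n.

Definition dist (p q : R * R) : R :=
  sqrt ((fst p - fst q) ^ 2 + (snd p - snd q) ^ 2).

Definition agree (n : nat) (v w : config) : Prop :=
  forall i, (i < n)%nat -> v i = w i.

(** The (unquotiented) polygon space: |v_i v_{i+1}| = l_i for all i. *)
Definition in_L (n : nat) (l : nat -> R) (v : config) : Prop :=
  forall i, (i < n)%nat -> dist (v i) (v (next n i)) = l i.

Definition area (n : nat) (v : config) : R :=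
  / 2 * rsum n (fun i => fst (v i) * snd (v (next n i))
                        - fst (v (next n i)) * snd (v i)).

Definition curve_vel (n : nat) (g g1 : R -> config) : Prop :=
  exists g2 : R -> config,
    forall i, (i < n)%nat -> forall t,
      derivable_pt_lim (fun s => fst (g s i)) t (fst (g1 t i)) /\
      derivable_pt_lim (fun s => snd (g s i)) t (snd (g1 t i)) /\
      derivable_pt_lim (fun s => fst (g1 s i)) t (fst (g2 t i)) /\
      derivable_pt_lim (fun s => snd (g1 s i)) t (snd (g2 t i)).

Definition adm (n : nat) (l : nat -> R) (P : config) (g : R -> config)
    (w : config) : Prop :=
  exists g1, curve_vel n g g1 /\ (forall t, in_L n l (g t)) /\
    agree n (g 0) P /\ agree n (g1 0) w.

Definition tangent (n : nat) (l : nat -> R) (P w : config) : Prop :=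
  exists g, adm n l P g w.

Definition has_d2_at0 (f : R -> R) (c : R) : Prop :=
  exists f' : R -> R, (forall t, derivable_pt_lim f t (f' t)) /\
    derivable_pt_lim f' 0 c.

Definition area_critical (n : nat) (l : nat -> R) (P : config) : Prop :=
  forall g w, adm n l P g w ->
    derivable_pt_lim (fun t => area n (g t)) 0 0.

(** Hessian quadratic form of the restricted area at P:
    hessQ w q  means  q = (A o g)''(0) for some admissible curve g
    through P with velocity w (well defined at critical points). *)
Definition hessQ (n : nat) (l : nat -> R) (P w : config) (q : R) : Prop :=
  exists g, adm n l P g w /\ has_d2_at0 (fun t => area n (g t)) q.

Definition vadd (v w : config) : config :=
  fun i => (fst (v i) + fst (w i), snd (v i) + snd (w i)).

(** w is a tangent vector in the kernel of the (polarized) Hessian form. *)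
Definition hess_kernel (n : nat) (l : nat -> R) (P w : config) : Prop :=
  tangent n l P w /\
  forall u qw qu qwu, hessQ n l P w qw -> hessQ n l P u qu ->
    hessQ n l P (vadd w u) qwu -> qwu = qw + qu.

(** Tangent vectors to the orbit of P under translations and rotations. *)
Definition orbit_tangent (n : nat) (P w : config) : Prop :=
  exists a b c : R, forall i, (i < n)%nat ->
    w i = (a - c * snd (P i), b + c * fst (P i)).

(** P is a nondegenerate (Morse) critical point of the area on the quotient
    L(l_1..l_n) = {polygons}/(translations, rotations): it is critical, and
    the kernel of the Hessian on the unquotiented space is exactly the
    tangent space of the orbit. *)
Definition morse_critical (n : nat) (l : nat -> R) (P : config) : Prop :=
  area_critical n l P /\
  forall w, hess_kernel n l P w <-> orbit_tangent n P w.

Definition on_circle (n : nat) (P : config) (O : R * R) (r : R) : Prop :=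
  0 < r /\ forall i, (i < n)%nat -> dist O (P i) = r.

Definition antipode (O p : R * R) : R * R :=
  (2 * fst O - fst p, 2 * snd O - snd p).

Definition collinear (n : nat) (P : config) : Prop :=
  exists a b c : R, (a <> 0 \/ b <> 0) /\
    forall i, (i < n)%nat -> a * fst (P i) + b * snd (P i) = c.

Definition uangle (u v : R * R) : R :=
  acos ((fst u * fst v + snd u * snd v) /
        (sqrt (fst u ^ 2 + snd u ^ 2) * sqrt (fst v ^ 2 + snd v ^ 2))).

Definition vsub (p q : R * R) : R * R := (fst p - fst q, snd p - snd q).

Definition alpha (n : nat) (O : R * R) (P : config) (i : nat) : R :=
  uangle (vsub (P i) O) (vsub (P (next n i)) O) / 2.

(** eps_i = 1 if O lies to the left of v_i -> v_{i+1}, -1 if to the right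
    (O on the line is excluded by the non-antipodality hypothesis). *)
Definition cross (u v : R * R) : R := fst u * snd v - snd u * fst v.

Definition eps (n : nat) (O : R * R) (P : config) (i : nat) : R :=
  if Rlt_dec 0 (cross (vsub (P (next n i)) (P i)) (vsub O (P i)))
  then 1 else -1.

Definition bifurcating (n : nat) (O : R * R) (P : config) : Prop :=
  rsum n (fun i => eps n O P i * tan (alpha n O P i)) = 0.

(* Main.v *)
Require Import Defs.
From Stdlib Require Import Reals Lra Lia Psatz ClassicalEpsilon.
Open Scope R_scope.


Lemma next_S n i : (S i < n)%nat -> next n i = S i.
Proof. intros H. unfold next. apply Nat.mod_small. exact H. Qed.

Lemma next_last n i : S i = n -> next n i = 0%nat.
Proof. intros H. unfold next. rewrite H. apply Nat.Div0.mod_same. Qed.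

Lemma next_lt n i : (i < n)%nat -> (next n i < n)%nat.
Proof.
  intros H. destruct (Nat.eq_dec (S i) n) as [E|E].
  - rewrite (next_last n i E). lia.
  - rewrite (next_S n i) by lia. lia.
Qed.

Lemma next_inj n i j : (i < n)%nat -> (j < n)%nat -> next n i = next n j -> i = j.
Proof.
  intros Hi Hj.
  destruct (Nat.eq_dec (S i) n) as [E|E];
  destruct (Nat.eq_dec (S j) n) as [E'|E'].
  - lia.
  - rewrite (next_last n i E), (next_S n j) by lia. lia.
  - rewrite (next_S n i), (next_last n j E') by lia. lia.
  - rewrite (next_S n i), (next_S n j) by lia. lia.
Qed.

Lemma rsum_ext n f g : (forall i, (i < n)%nat -> f i = g i) -> rsum n f = rsum n g.
Proof.
  induction n; simpl; intros H; [reflexivity|].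
  rewrite IHn by (intros; apply H; lia). rewrite H by lia. reflexivity.
Qed.

Lemma rsum_plus n f g : rsum n (fun i => f i + g i) = rsum n f + rsum n g.
Proof. induction n; simpl; [lra|]. rewrite IHn. lra. Qed.

Lemma rsum_minus n f g : rsum n (fun i => f i - g i) = rsum n f - rsum n g.
Proof. induction n; simpl; [lra|]. rewrite IHn. lra. Qed.

Lemma rsum_scal n c f : rsum n (fun i => c * f i) = c * rsum n f.
Proof. induction n; simpl; [lra|]. rewrite IHn. lra. Qed.

Lemma rsum_0 n : rsum n (fun _ => 0) = 0.
Proof. induction n; simpl; [lra|]. rewrite IHn. lra. Qed.

Lemma rsum_const n c : rsum n (fun _ => c) = INR n * c.
Proof. induction n; simpl rsum; [simpl; lra|]. rewrite IHn, S_INR. lra. Qed.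

Lemma rsum_S_l k f : rsum (S k) f = f 0%nat + rsum k (fun i => f (S i)).
Proof.
  induction k; simpl; [lra|].
  simpl in IHk. rewrite IHk. lra.
Qed.

Lemma rsum_shift n f : (0 < n)%nat -> rsum n (fun i => f (next n i)) = rsum n f.
Proof.
  intros Hn. destruct n as [|k]; [lia|].
  cbn [rsum].
  rewrite (rsum_ext k (fun i => f (next (S k) i)) (fun i => f (S i))).
  2:{ intros i Hi. rewrite next_S by lia. reflexivity. }
  rewrite (next_last (S k) k) by reflexivity.
  change (rsum k f + f k) with (rsum (S k) f). rewrite rsum_S_l. lra.
Qed.

Lemma rsum_tele n F : (0 < n)%nat -> rsum n (fun i => F (next n i) - F i) = 0.
Proof. intros Hn. rewrite rsum_minus, rsum_shift by exact Hn. lra. Qed.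

Lemma rsum_delta n j f : (j < n)%nat ->
  rsum n (fun i => if Nat.eqb i j then f i else 0) = f j.
Proof.
  induction n; intros Hj; [lia|]. simpl.
  destruct (Nat.eq_dec j n) as [->|E].
  - rewrite Nat.eqb_refl.
    rewrite (rsum_ext n _ (fun _ => 0)). 2:{ intros i Hi. destruct (Nat.eqb_spec i n); [lia|reflexivity]. }
    rewrite rsum_0. lra.
  - rewrite IHn by lia. destruct (Nat.eqb_spec n j); [lia|]. lra.
Qed.

Lemma rsum_opp n f : rsum n (fun i => - f i) = - rsum n f.
Proof. induction n; simpl; [lra|]. rewrite IHn. lra. Qed.


Lemma D_const c x : derivable_pt_lim (fun _ => c) x 0.
Proof. apply (derivable_pt_lim_const c x). Qed.

Lemma D_id x : derivable_pt_lim (fun t => t) x 1.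
Proof. apply (derivable_pt_lim_id x). Qed.

Lemma D_plus f g x a b : derivable_pt_lim f x a -> derivable_pt_lim g x b ->
  derivable_pt_lim (fun t => f t + g t) x (a + b).
Proof. intros. apply (derivable_pt_lim_plus f g); auto. Qed.

Lemma D_minus f g x a b : derivable_pt_lim f x a -> derivable_pt_lim g x b ->
  derivable_pt_lim (fun t => f t - g t) x (a - b).
Proof. intros. apply (derivable_pt_lim_minus f g); auto. Qed.

Lemma D_mult f g x a b : derivable_pt_lim f x a -> derivable_pt_lim g x b ->
  derivable_pt_lim (fun t => f t * g t) x (a * g x + f x * b).
Proof. intros. apply (derivable_pt_lim_mult f g); auto. Qed.

Lemma D_comp h f x a b : derivable_pt_lim f x a -> derivable_pt_lim h (f x) b ->
  derivable_pt_lim (fun t => h (f t)) x (b * a).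
Proof. intros. apply (derivable_pt_lim_comp f h); auto. Qed.

Lemma D_ext f g x l : (forall z, f z = g z) -> derivable_pt_lim f x l -> derivable_pt_lim g x l.
Proof. intros. apply (derivable_pt_lim_ext f g); auto. Qed.

Lemma D_eqv f x l l' : l = l' -> derivable_pt_lim f x l -> derivable_pt_lim f x l'.
Proof. intros ->; auto. Qed.

Lemma D_rsum n (F : nat -> R -> R) (F' : nat -> R) x :
  (forall i, (i < n)%nat -> derivable_pt_lim (F i) x (F' i)) ->
  derivable_pt_lim (fun t => rsum n (fun i => F i t)) x (rsum n F').
Proof.
  induction n; intros H; simpl.
  - apply D_const.
  - apply D_plus. apply IHn. intros; apply H; lia. apply H; lia.
Qed.

Definition C2 (f f1 f2 : R -> R) : Prop :=
  forall t, derivable_pt_lim f t (f1 t) /\ derivable_pt_lim f1 t (f2 t).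

Lemma C2_const c : C2 (fun _ => c) (fun _ => 0) (fun _ => 0).
Proof. intro t; split; apply D_const. Qed.

Lemma C2_id : C2 (fun t => t) (fun _ => 1) (fun _ => 0).
Proof. intro t; split; [apply D_id|apply D_const]. Qed.

Lemma C2_plus f f1 f2 g g1 g2 : C2 f f1 f2 -> C2 g g1 g2 ->
  C2 (fun t => f t + g t) (fun t => f1 t + g1 t) (fun t => f2 t + g2 t).
Proof. intros Hf Hg t; destruct (Hf t), (Hg t); split; apply D_plus; auto. Qed.

Lemma C2_minus f f1 f2 g g1 g2 : C2 f f1 f2 -> C2 g g1 g2 ->
  C2 (fun t => f t - g t) (fun t => f1 t - g1 t) (fun t => f2 t - g2 t).
Proof. intros Hf Hg t; destruct (Hf t), (Hg t); split; apply D_minus; auto. Qed.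

Lemma C2_mult f f1 f2 g g1 g2 : C2 f f1 f2 -> C2 g g1 g2 ->
  C2 (fun t => f t * g t) (fun t => f1 t * g t + f t * g1 t)
     (fun t => f2 t * g t + f1 t * g1 t + (f1 t * g1 t + f t * g2 t)).
Proof.
  intros Hf Hg t; destruct (Hf t), (Hg t); split.
  - apply D_mult; auto.
  - apply D_plus; apply D_mult; auto.
Qed.

Lemma C2_comp_on (Pd : R -> Prop) h h1 h2 f f1 f2 :
  (forall x, Pd x -> derivable_pt_lim h x (h1 x) /\ derivable_pt_lim h1 x (h2 x)) ->
  (forall t, Pd (f t)) -> C2 f f1 f2 ->
  C2 (fun t => h (f t)) (fun t => h1 (f t) * f1 t)
     (fun t => h2 (f t) * f1 t * f1 t + h1 (f t) * f2 t).
Proof.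
  intros Hh Hp Hf t. destruct (Hf t) as [A B]. destruct (Hh (f t) (Hp t)) as [C D].
  split.
  - apply D_comp; auto.
  - eapply D_eqv; [|apply D_mult; [apply D_comp; [exact A| exact D] | exact B]].
    cbv beta; ring.
Qed.

Lemma C2_comp h h1 h2 f f1 f2 : C2 h h1 h2 -> C2 f f1 f2 ->
  C2 (fun t => h (f t)) (fun t => h1 (f t) * f1 t)
     (fun t => h2 (f t) * f1 t * f1 t + h1 (f t) * f2 t).
Proof.
  intros Hh Hf. apply (C2_comp_on (fun _ => True)); auto.
Qed.

Lemma C2_sin : C2 sin cos (fun t => - sin t).
Proof. intro t; split; [apply derivable_pt_lim_sin|apply derivable_pt_lim_cos]. Qed.

Lemma C2_cos : C2 cos (fun t => - sin t) (fun t => - cos t).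
Proof.
  intro t; split; [apply derivable_pt_lim_cos|].
  apply (derivable_pt_lim_opp sin). apply derivable_pt_lim_sin.
Qed.

Lemma D_inv_raw x : x <> 0 -> derivable_pt_lim (fun y => / y) x (- / (x * x)).
Proof.
  intros Hx.
  eapply D_eqv; [|apply (D_ext (fun y => 1 / y)); [intro; unfold Rdiv; ring|]].
  2:{ apply (derivable_pt_lim_div (fun _ => 1) (fun y => y)); [apply D_const|apply D_id|exact Hx]. }
  unfold Rsqr. field. exact Hx.
Qed.

Lemma D_inv2_raw x : x <> 0 -> derivable_pt_lim (fun y => - / (y * y)) x (2 / (x * x * x)).
Proof.
  intros Hx.
  eapply D_eqv; [|apply (D_comp (fun y => - / y) (fun y => y * y))].
  3:{ apply (derivable_pt_lim_opp (fun y => / y)). apply D_inv_raw.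
      intro H. apply Hx. nra. }
  2:{ apply D_mult; apply D_id. }
  cbv beta; field. exact Hx.
Qed.

Lemma C2_inv f f1 f2 : (forall t, f t <> 0) -> C2 f f1 f2 ->
  C2 (fun t => / f t) (fun t => - / (f t * f t) * f1 t)
     (fun t => 2 / (f t * f t * f t) * f1 t * f1 t + - / (f t * f t) * f2 t).
Proof.
  intros Hn Hf.
  apply (C2_comp_on (fun x => x <> 0) (fun y => / y) (fun y => - / (y * y))
           (fun y => 2 / (y * y * y))); auto.
  intros x Hx; split; [apply D_inv_raw|apply D_inv2_raw]; auto.
Qed.

Lemma D_sqrt1_raw x : 0 < x ->
  derivable_pt_lim (fun y => / (2 * sqrt y)) x (- / (4 * x * sqrt x)).
Proof.
  intros Hx. pose proof (sqrt_lt_R0 x Hx) as Hs.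
  pose proof (sqrt_sqrt x (Rlt_le _ _ Hx)) as Hss.
  eapply D_eqv; [|apply (D_comp (fun y => / y) (fun y => 2 * sqrt y))].
  3:{ apply D_inv_raw. lra. }
  2:{ eapply D_eqv; [|apply D_mult; [apply D_const|apply derivable_pt_lim_sqrt; exact Hx]]. reflexivity. }
  cbv beta. replace (4 * x * sqrt x) with (4 * (sqrt x * sqrt x) * sqrt x) by (rewrite Hss; ring).
  field. lra.
Qed.

Lemma C2_sqrt f f1 f2 : (forall t, 0 < f t) -> C2 f f1 f2 ->
  C2 (fun t => sqrt (f t)) (fun t => / (2 * sqrt (f t)) * f1 t)
     (fun t => - / (4 * f t * sqrt (f t)) * f1 t * f1 t + / (2 * sqrt (f t)) * f2 t).
Proof.
  intros Hp Hf.
  apply (C2_comp_on (fun x => 0 < x) sqrt (fun y => / (2 * sqrt y))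
           (fun y => - / (4 * y * sqrt y))); auto.
  intros x Hx; split; [apply derivable_pt_lim_sqrt; auto|apply D_sqrt1_raw; auto].
Qed.

Lemma C2_rsum n (F F1 F2 : nat -> R -> R) :
  (forall i, (i < n)%nat -> C2 (F i) (F1 i) (F2 i)) ->
  C2 (fun t => rsum n (fun i => F i t)) (fun t => rsum n (fun i => F1 i t))
     (fun t => rsum n (fun i => F2 i t)).
Proof.
  intros H t; split; apply D_rsum; intros i Hi; apply (H i Hi).
Qed.

Lemma C2_ext f g f1 f2 : (forall t, f t = g t) -> C2 f f1 f2 -> C2 g f1 f2.
Proof. intros E H t; destruct (H t); split; auto. eapply D_ext; eauto. Qed.


Definition areaD (n : nat) (v w : config) : R :=
  / 2 * rsum n (fun i => fst (w i) * snd (v (next n i)) + fst (v i) * snd (w (next n i))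
                        - (fst (w (next n i)) * snd (v i) + fst (v (next n i)) * snd (w i))).

Definition HD (n : nat) (g : R -> config) (t : R) (w : config) : Prop :=
  forall i, (i < n)%nat ->
    derivable_pt_lim (fun s => fst (g s i)) t (fst (w i)) /\
    derivable_pt_lim (fun s => snd (g s i)) t (snd (w i)).

Lemma area_D n g t w : (0 < n)%nat -> HD n g t w ->
  derivable_pt_lim (fun s => area n (g s)) t (areaD n (g t) w).
Proof.
  intros Hn H. unfold area, areaD.
  eapply D_eqv; [|apply D_mult; [apply D_const|]].
  2:{ apply (D_rsum n (fun i s => fst (g s i) * snd (g s (next n i)) - fst (g s (next n i)) * snd (g s i))).
      intros i Hi. destruct (H i Hi) as [A B]. destruct (H (next n i) (next_lt n i Hi)) as [C D].
      apply D_minus; apply D_mult; eauto. }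
  cbv beta. ring.
Qed.

Lemma areaD_D n g h t w z : (0 < n)%nat -> HD n g t w -> HD n h t z ->
  derivable_pt_lim (fun s => areaD n (g s) (h s)) t (areaD n (g t) z + areaD n w (h t)).
Proof.
  intros Hn H1 H2. unfold areaD.
  eapply D_eqv; [|apply D_mult; [apply D_const|]].
  2:{ apply (D_rsum n (fun i s => fst (h s i) * snd (g s (next n i)) + fst (g s i) * snd (h s (next n i))
                        - (fst (h s (next n i)) * snd (g s i) + fst (g s (next n i)) * snd (h s i)))).
      intros i Hi. destruct (H1 i Hi) as [A B]. destruct (H1 (next n i) (next_lt n i Hi)) as [C D].
      destruct (H2 i Hi) as [A' B']. destruct (H2 (next n i) (next_lt n i Hi)) as [C' D'].
      apply D_minus; apply D_plus; apply D_mult; eauto. }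
  cbv beta. rewrite <- Rmult_plus_distr_l, <- rsum_plus.
  replace (0 * _ ) with 0 by ring. rewrite Rplus_0_l. f_equal.
  apply rsum_ext. intros i Hi. ring.
Qed.

Lemma areaD_agree n v v' w w' : (0 < n)%nat -> agree n v v' -> agree n w w' ->
  areaD n v w = areaD n v' w'.
Proof.
  intros Hn A B. unfold areaD. f_equal. apply rsum_ext. intros i Hi.
  rewrite (A i Hi), (B i Hi), (A _ (next_lt n i Hi)), (B _ (next_lt n i Hi)). reflexivity.
Qed.

Definition sqd (p q : R * R) : R := (fst p - fst q) * (fst p - fst q) + (snd p - snd q) * (snd p - snd q).

Lemma inL_sq n l v i : in_L n l v -> (i < n)%nat -> sqd (v i) (v (next n i)) = l i * l i.
Proof.
  intros H Hi. specialize (H i Hi). unfold Defs.dist in H. unfold sqd.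
  rewrite <- H. rewrite sqrt_sqrt; [ring|].
  apply Rplus_le_le_0_compat; apply pow2_ge_0.
Qed.

Lemma inL_nonneg n l v i : in_L n l v -> (i < n)%nat -> 0 <= l i.
Proof. intros H Hi. rewrite <- (H i Hi). unfold Defs.dist. apply sqrt_pos. Qed.

Definition dsq (p q p1 q1 : R * R) : R :=
  (fst p - fst q) * (fst p1 - fst q1) + (snd p - snd q) * (snd p1 - snd q1).

Lemma const_deriv0 (f : R -> R) c t l : (forall s, f s = c) -> derivable_pt_lim f t l -> l = 0.
Proof.
  intros E D. eapply uniqueness_limite; [exact D|].
  eapply D_ext; [intro s; symmetry; apply E|]. apply D_const.
Qed.

Lemma adm_core n l P g w : (0 < n)%nat -> adm n l P g w ->
  exists g1 g2 : R -> config,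
    (forall t, HD n g t (g1 t)) /\ (forall t, HD n g1 t (g2 t)) /\
    agree n (g 0) P /\ agree n (g1 0) w /\
    (forall t i, (i < n)%nat -> dsq (g t i) (g t (next n i)) (g1 t i) (g1 t (next n i)) = 0) /\
    (forall i, (i < n)%nat -> sqd (g1 0 i) (g1 0 (next n i)) +
                 dsq (g 0 i) (g 0 (next n i)) (g2 0 i) (g2 0 (next n i)) = 0).
Proof.
  intros Hn [g1 [[g2 Hc] [HL [A0 A1]]]].
  assert (H1 : forall t, HD n g t (g1 t)) by (intros t i Hi; destruct (Hc i Hi t) as [? [? _]]; auto).
  assert (H2 : forall t, HD n g1 t (g2 t)) by (intros t i Hi; destruct (Hc i Hi t) as [_ [_ [? ?]]]; auto).
  assert (T1 : forall t i, (i < n)%nat -> dsq (g t i) (g t (next n i)) (g1 t i) (g1 t (next n i)) = 0).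
  { intros t i Hi.
    destruct (H1 t i Hi) as [A B]. destruct (H1 t (next n i) (next_lt n i Hi)) as [C D].
    assert (E := const_deriv0 (fun s => sqd (g s i) (g s (next n i))) (l i * l i) t
      (2 * dsq (g t i) (g t (next n i)) (g1 t i) (g1 t (next n i)))).
    unfold sqd in E. cbv beta in E.
    assert (2 * dsq (g t i) (g t (next n i)) (g1 t i) (g1 t (next n i)) = 0); [|lra].
    apply E. { intro s. apply (inL_sq n l (g s) i (HL s) Hi). }
    unfold dsq. eapply D_eqv; [|apply D_plus; apply D_mult; apply D_minus; eauto].
    cbv beta. ring. }
  exists g1, g2. split; [auto|split;[auto|split;[auto|split;[auto|split;[auto|]]]]].
  intros i Hi.
  destruct (H1 0 i Hi) as [A B]. destruct (H1 0 (next n i) (next_lt n i Hi)) as [C D].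
  destruct (H2 0 i Hi) as [A' B']. destruct (H2 0 (next n i) (next_lt n i Hi)) as [C' D'].
  apply (const_deriv0 (fun s => dsq (g s i) (g s (next n i)) (g1 s i) (g1 s (next n i))) 0 0).
  { intro s. apply T1; auto. }
  unfold dsq, sqd. eapply D_eqv; [|apply D_plus; apply D_mult; apply D_minus; eauto].
  cbv beta. ring.
Qed.

Lemma cv_tan n l g g1 : curve_vel n g g1 -> (forall t, in_L n l (g t)) ->
  forall t i, (i < n)%nat -> dsq (g t i) (g t (next n i)) (g1 t i) (g1 t (next n i)) = 0.
Proof.
  intros [g2 Hc] HL t i Hi.
  assert (H1 : HD n g t (g1 t)) by (intros j Hj; destruct (Hc j Hj t) as [? [? _]]; auto).
  destruct (H1 i Hi) as [A B]. destruct (H1 (next n i) (next_lt n i Hi)) as [C D].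
  assert (E := const_deriv0 (fun s => sqd (g s i) (g s (next n i))) (l i * l i) t
    (2 * dsq (g t i) (g t (next n i)) (g1 t i) (g1 t (next n i)))).
  unfold sqd in E. cbv beta in E.
  assert (2 * dsq (g t i) (g t (next n i)) (g1 t i) (g1 t (next n i)) = 0); [|lra].
  apply E. { intro s. apply (inL_sq n l (g s) i (HL s) Hi). }
  unfold dsq. eapply D_eqv; [|apply D_plus; apply D_mult; apply D_minus; eauto].
  cbv beta. ring.
Qed.


Lemma m_prop_R (px py qx qy r : R) :
  px*px+py*py = r*r -> qx*qx+qy*qy = r*r ->
  (qx-px)*(qx-px)+(qy-py)*(qy-py) <> 0 ->
  px+qx = - (((qx-px)*(py+qy) - (qy-py)*(px+qx)) / ((qx-px)*(qx-px)+(qy-py)*(qy-py))) * (qy-py) /\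
  py+qy = (((qx-px)*(py+qy) - (qy-py)*(px+qx)) / ((qx-px)*(qx-px)+(qy-py)*(qy-py))) * (qx-px).
Proof.
  intros H1 H2 HE.
  set (E := (qx-px)*(qx-px)+(qy-py)*(qy-py)) in *.
  set (X := (qx-px)*(py+qy) - (qy-py)*(px+qx)).
  assert (D : (px+qx)*(qx-px) + (py+qy)*(qy-py) = 0) by nra.
  assert (A : (px+qx)*E - (-X*(qy-py)) = (qx-px) * ((px+qx)*(qx-px) + (py+qy)*(qy-py))) by (unfold E, X; ring).
  assert (B : (py+qy)*E - (X*(qx-px)) = (qy-py) * ((px+qx)*(qx-px) + (py+qy)*(qy-py))) by (unfold E, X; ring).
  rewrite D, Rmult_0_r in A, B.
  split; [apply (Rmult_eq_reg_r E)|apply (Rmult_eq_reg_r E)]; auto; unfold Rdiv.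
  - replace (- (X * / E) * (qy - py) * E) with (-X*(qy-py)) by (field; auto). lra.
  - replace (X * / E * (qx - px) * E) with (X*(qx-px)) by (field; auto). lra.
Qed.

Section Cyc.
Variables (n : nat) (P : config) (O : R * R) (r : R).

Definition px i := fst (P i) - fst O.
Definition py i := snd (P i) - snd O.
Definition ex i := fst (P (next n i)) - fst (P i).
Definition ey i := snd (P (next n i)) - snd (P i).
Definition elen i := ex i * ex i + ey i * ey i.
Definition mm i := (ex i * (py i + py (next n i)) - ey i * (px i + px (next n i))) / elen i.

Hypothesis Hcirc : forall i, (i < n)%nat -> px i * px i + py i * py i = r * r.
Hypothesis Hel : forall i, (i < n)%nat -> elen i <> 0.
Hypothesis Hn : (0 < n)%nat.

Lemma m_prop i : (i < n)%nat ->
  px i + px (next n i) = - mm i * ey i /\ py i + py (next n i) = mm i * ex i.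
Proof.
  intros Hi. pose proof (next_lt n i Hi) as Hi'.
  assert (Ex : ex i = px (next n i) - px i) by (unfold ex, px; ring).
  assert (Ey : ey i = py (next n i) - py i) by (unfold ey, py; ring).
  unfold mm, elen. rewrite Ex, Ey.
  apply m_prop_R with r; auto.
  pose proof (Hel i Hi) as H. unfold elen in H. rewrite Ex, Ey in H. exact H.
Qed.

Definition Kz (z : config) j := fst (z j) * py j - snd (z j) * px j - (fst (z j) * snd O - snd (z j) * fst O).

Lemma area_term i z : (i < n)%nat ->
  fst (z i) * snd (P (next n i)) + fst (P i) * snd (z (next n i))
  - (fst (z (next n i)) * snd (P i) + fst (P (next n i)) * snd (z i))
  = - mm i * (ex i * (fst (z (next n i)) - fst (z i)) + ey i * (snd (z (next n i)) - snd (z i)))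
    + (Kz z (next n i) - Kz z i).
Proof.
  intros Hi. destruct (m_prop i Hi) as [A B].
  set (j := next n i) in *.
  assert (L : forall a b : R, a = b -> a - b = 0) by (intros; lra).
  apply L in A; apply L in B.
  match goal with |- ?X = ?Y => assert (X - Y = (px i + px j - - mm i * ey i) * (snd (z j) - snd (z i))
        - (py i + py j - mm i * ex i) * (fst (z j) - fst (z i))) end.
  { unfold Kz, px, py, ex, ey. fold j. ring. }
  rewrite A, B in H. lra.
Qed.

Lemma areaD_P z : areaD n P z =
  - / 2 * rsum n (fun i => mm i * (ex i * (fst (z (next n i)) - fst (z i)) + ey i * (snd (z (next n i)) - snd (z i)))).
Proof.
  unfold areaD.
  rewrite (rsum_ext n _ (fun i => - (mm i * (ex i * (fst (z (next n i)) - fst (z i)) + ey i * (snd (z (next n i)) - snd (z i))))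
    + (Kz z (next n i) - Kz z i))).
  2:{ intros i Hi. rewrite area_term by auto. ring. }
  rewrite rsum_plus, rsum_tele by auto.
  rewrite rsum_opp.
  ring.
Qed.


Definition tlin (w : config) := forall i, (i < n)%nat ->
  ex i * (fst (w (next n i)) - fst (w i)) + ey i * (snd (w (next n i)) - snd (w i)) = 0.

Definition qf (w : config) := / 2 * rsum n (fun i => mm i * sqd (w i) (w (next n i))) + areaD n w w.

Lemma adm_info l g w : adm n l P g w ->
  tlin w /\ derivable_pt_lim (fun t => area n (g t)) 0 0 /\
  has_d2_at0 (fun t => area n (g t)) (qf w) /\
  (forall c, has_d2_at0 (fun t => area n (g t)) c -> c = qf w).
Proof.
  intros Ha.
  destruct (adm_core n l P g w Hn Ha) as [g1 [g2 [H1 [H2 [A0 [A1 [T1 T2]]]]]]].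
  assert (Htlin : tlin w).
  { intros i Hi. pose proof (T1 0 i Hi) as E. unfold dsq in E.
    rewrite (A0 i Hi), (A0 _ (next_lt n i Hi)), (A1 i Hi), (A1 _ (next_lt n i Hi)) in E.
    unfold ex, ey. lra. }
  assert (Dall : forall t, derivable_pt_lim (fun s => area n (g s)) t (areaD n (g t) (g1 t))).
  { intro t. apply area_D; auto. }
  assert (V0 : areaD n (g 0) (g1 0) = 0).
  { rewrite (areaD_agree n (g 0) P (g1 0) w); auto. rewrite areaD_P.
    rewrite (rsum_ext n _ (fun _ => 0)); [rewrite rsum_0; ring|].
    intros i Hi. rewrite (Htlin i Hi). ring. }
  assert (D2 : derivable_pt_lim (fun s => areaD n (g s) (g1 s)) 0 (qf w)).
  { eapply D_eqv; [|apply areaD_D; auto].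
    rewrite (areaD_agree n (g1 0) w (g1 0) w); auto.
    rewrite (areaD_agree n (g 0) P (g2 0) (g2 0)); auto; [|intros i Hi; reflexivity].
    rewrite areaD_P. unfold qf. f_equal.
    match goal with |- - / 2 * rsum n ?F = / 2 * rsum n ?G =>
      assert (S : rsum n F = rsum n (fun i => - G i)); [|rewrite S, rsum_opp; ring] end.
    apply rsum_ext. intros i Hi. pose proof (T2 i Hi) as E. unfold dsq, sqd in *.
    rewrite (A0 i Hi), (A0 _ (next_lt n i Hi)), (A1 i Hi), (A1 _ (next_lt n i Hi)) in E.
    unfold ex, ey. cbv beta.
    match goal with |- mm i * ?Y = _ => replace Y with
      (-((fst (w i) - fst (w (next n i))) * (fst (w i) - fst (w (next n i))) +
       (snd (w i) - snd (w (next n i))) * (snd (w i) - snd (w (next n i))))) by lra end.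
    ring. }
  split; [exact Htlin|]. split; [eapply D_eqv; [exact V0|apply Dall]|]. split.
  - exists (fun t => areaD n (g t) (g1 t)). split; auto.
  - intros c [f' [Hf Hc]].
    assert (E : forall t, f' t = areaD n (g t) (g1 t)).
    { intro t. eapply uniqueness_limite; [apply Hf|apply Dall]. }
    eapply uniqueness_limite; [|exact D2].
    eapply D_ext; [exact E|exact Hc].
Qed.


Lemma perp_decomp (ax ay dx dy : R) : ax * dx + ay * dy = 0 -> ax * ax + ay * ay <> 0 ->
  dx = - ((ax * dy - ay * dx) / (ax * ax + ay * ay)) * ay /\
  dy = ((ax * dy - ay * dx) / (ax * ax + ay * ay)) * ax.
Proof.
  intros H E. split; apply (Rmult_eq_reg_r (ax * ax + ay * ay)); auto; unfold Rdiv.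
  - replace (- ((ax * dy - ay * dx) * / (ax * ax + ay * ay)) * ay * (ax * ax + ay * ay))
      with (- ((ax * dy - ay * dx) * ay)) by (field; auto).
    replace (dx * (ax * ax + ay * ay)) with (ax * (ax * dx + ay * dy) - (ax * dy - ay * dx) * ay) by ring.
    rewrite H. ring.
  - replace ((ax * dy - ay * dx) * / (ax * ax + ay * ay) * ax * (ax * ax + ay * ay))
      with ((ax * dy - ay * dx) * ax) by (field; auto).
    replace (dy * (ax * ax + ay * ay)) with (ay * (ax * dx + ay * dy) + (ax * dy - ay * dx) * ax) by ring.
    rewrite H. ring.
Qed.

Definition phi (w : config) i :=
  (ex i * (snd (w (next n i)) - snd (w i)) - ey i * (fst (w (next n i)) - fst (w i))) / elen i.

Lemma tl_phi w i : tlin w -> (i < n)%nat ->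
  fst (w (next n i)) - fst (w i) = - phi w i * ey i /\
  snd (w (next n i)) - snd (w i) = phi w i * ex i.
Proof.
  intros H Hi. unfold phi, elen. apply perp_decomp. apply H; auto. apply Hel; auto.
Qed.

Definition sv (u : config) j := px j * fst (u j) + py j * snd (u j).
Definition Fv (w u : config) j := - snd (w j) * fst (u j) + fst (w j) * snd (u j).

Definition Tt (w u : config) i :=
  mm i * ((fst (w i) - fst (w (next n i))) * (fst (u i) - fst (u (next n i))) +
          (snd (w i) - snd (w (next n i))) * (snd (u i) - snd (u (next n i)))) +
  (fst (u i) * snd (w (next n i)) + fst (w i) * snd (u (next n i))
     - (fst (u (next n i)) * snd (w i) + fst (w (next n i)) * snd (u i))).

Lemma qf_rsum w : qf w = rsum n (fun i => / 2 * (mm i * sqd (w i) (w (next n i))) +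
   / 2 * (fst (w i) * snd (w (next n i)) + fst (w i) * snd (w (next n i))
          - (fst (w (next n i)) * snd (w i) + fst (w (next n i)) * snd (w i)))).
Proof. unfold qf, areaD. rewrite rsum_plus, !rsum_scal. reflexivity. Qed.

Lemma qf_polar w u : qf (vadd w u) = qf w + qf u + rsum n (Tt w u).
Proof.
  rewrite !qf_rsum, <- !rsum_plus. apply rsum_ext. intros i Hi.
  unfold Tt, vadd, sqd. simpl. field.
Qed.

Lemma Tt_id w u i : tlin w -> (i < n)%nat ->
  Tt w u i = 2 * phi w i * (sv u (next n i) - sv u i) + (Fv w u (next n i) - Fv w u i).
Proof.
  intros H Hi. destruct (tl_phi w i H Hi) as [A B]. destruct (m_prop i Hi) as [C D].
  set (j := next n i) in *. set (f := phi w i) in *. set (m := mm i) in *.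
  assert (A' : fst (w j) = fst (w i) - f * ey i) by lra.
  assert (B' : snd (w j) = snd (w i) + f * ex i) by lra.
  unfold Tt, sv, Fv. fold j. fold m. rewrite A', B'.
  assert (L : forall a b : R, a = b -> a - b = 0) by (intros; lra).
  apply L in C; apply L in D.
  match goal with |- ?X = ?Y => assert (E : X - Y = f * ((px i + px j - - m * ey i) * (fst (u i) - fst (u j))
      + (py i + py j - m * ex i) * (snd (u i) - snd (u j)))) end.
  { unfold ex, ey, px, py. fold j. ring. }
  rewrite C, D in E. lra.
Qed.

Lemma polar_sum w u : tlin w ->
  rsum n (Tt w u) = 2 * rsum n (fun i => phi w i * (sv u (next n i) - sv u i)).
Proof.
  intros H. rewrite (rsum_ext n (Tt w u) (fun i => 2 * (phi w i * (sv u (next n i) - sv u i))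
     + (Fv w u (next n i) - Fv w u i))).
  2:{ intros i Hi. rewrite Tt_id; auto. ring. }
  rewrite rsum_plus, rsum_tele, rsum_scal by auto. ring.
Qed.

Hypothesis Hm : forall i, (i < n)%nat -> mm i <> 0.

Definition Phi (rho : nat -> R) := rsum n (fun i => (rho i + rho (next n i)) / mm i).
Definition tau (rho : nat -> R) k := rsum k (fun i => (rho i + rho (next n i)) / mm i).
Definition uvec (rho : nat -> R) : config :=
  fun k => (rho k * px k - tau rho k * py k, rho k * py k + tau rho k * px k).

Lemma tau_step rho i : Phi rho = 0 -> (i < n)%nat ->
  tau rho (next n i) - tau rho i = (rho i + rho (next n i)) / mm i.
Proof.
  intros H Hi. destruct (Nat.eq_dec (S i) n) as [E|E].
  - assert (HP : Phi rho = tau rho (S i)) by (unfold Phi, tau; rewrite E; reflexivity).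
    rewrite H in HP. unfold tau in HP. simpl in HP. rewrite (next_last n i E) in *.
    unfold tau. simpl. lra.
  - rewrite (next_S n i) by lia. unfold tau. simpl. rewrite (next_S n i) by lia. ring.
Qed.

Lemma tang_alg (a b c d r0 rho rho' t t' m : R) :
  a * a + b * b = r0 -> c * c + d * d = r0 ->
  m * ((c - a) * (c - a) + (d - b) * (d - b)) = (c - a) * (b + d) - (d - b) * (a + c) ->
  (t' - t) * m = rho + rho' ->
  (c - a) * ((rho' * c - t' * d) - (rho * a - t * b)) +
  (d - b) * ((rho' * d + t' * c) - (rho * b + t * a)) = 0.
Proof.
  intros N1 N2 M T.
  set (E := (c - a) * (c - a) + (d - b) * (d - b)) in *.
  set (X := a * d - b * c).
  assert (K : (c - a) * ((rho' * c - t' * d) - (rho * a - t * b)) +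
    (d - b) * ((rho' * d + t' * c) - (rho * b + t * a)) =
    (rho + rho') * E / 2 + (t' - t) * X + (rho' - rho) * ((c*c+d*d) - (a*a+b*b)) / 2)
    by (unfold E, X; field).
  rewrite K, N1, N2. rewrite <- T.
  assert (M' : m * E = - 2 * X) by (rewrite M; unfold X; ring).
  replace ((t' - t) * m * E / 2 + (t' - t) * X + (rho' - rho) * (r0 - r0) / 2)
    with ((t' - t) * (m * E + 2 * X) / 2) by field.
  rewrite M'. field.
Qed.

Lemma mm_E i : (i < n)%nat ->
  mm i * ((px (next n i) - px i) * (px (next n i) - px i) + (py (next n i) - py i) * (py (next n i) - py i))
  = (px (next n i) - px i) * (py i + py (next n i)) - (py (next n i) - py i) * (px i + px (next n i)).
Proof.
  intros Hi. assert (Ex : ex i = px (next n i) - px i) by (unfold ex, px; ring).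
  assert (Ey : ey i = py (next n i) - py i) by (unfold ey, py; ring).
  rewrite <- Ex, <- Ey. unfold mm. fold (elen i). field. apply Hel; auto.
Qed.

Lemma uvec_tl rho : Phi rho = 0 -> tlin (uvec rho).
Proof.
  intros H i Hi. pose proof (next_lt n i Hi) as Hi'.
  assert (Ex : ex i = px (next n i) - px i) by (unfold ex, px; ring).
  assert (Ey : ey i = py (next n i) - py i) by (unfold ey, py; ring).
  rewrite Ex, Ey. unfold uvec. simpl.
  apply (tang_alg _ _ _ _ (r * r) _ _ _ _ (mm i)); auto.
  - apply mm_E; auto.
  - rewrite (tau_step rho i H Hi). field. apply Hm; auto.
Qed.

Lemma sv_uvec rho j : (j < n)%nat -> sv (uvec rho) j = r * r * rho j.
Proof.
  intros Hj. unfold sv, uvec. simpl. rewrite <- (Hcirc j Hj). ring.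
Qed.

Lemma Phi_lin (rho : nat -> R) lam :
  Phi (fun k => rho k - lam) = Phi rho - lam * Phi (fun _ => 1).
Proof.
  unfold Phi. rewrite <- rsum_scal, <- rsum_minus. apply rsum_ext. intros i Hi.
  field. apply Hm; auto.
Qed.

Hypothesis Hr : 0 < r.

Lemma phi_step w : tlin w ->
  (forall rho, Phi rho = 0 -> rsum n (fun i => phi w i * (sv (uvec rho) (next n i) - sv (uvec rho) i)) = 0) ->
  Phi (fun _ => 1) <> 0 -> forall j, (j < n)%nat -> phi w j = phi w (next n j).
Proof.
  intros Hw HK H1 j Hj. pose proof (next_lt n j Hj) as Hj'.
  set (dl := fun k => if Nat.eqb k (next n j) then 1 else 0).
  set (lam := Phi dl / Phi (fun _ => 1)).
  set (rho := fun k => dl k - lam).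
  assert (HP : Phi rho = 0).
  { unfold rho. rewrite Phi_lin. unfold lam. field. auto. }
  specialize (HK rho HP).
  rewrite (rsum_ext n _ (fun i => r * r * (phi w i * dl (next n i) - phi w i * dl i))) in HK.
  2:{ intros i Hi. rewrite !sv_uvec by (auto; apply next_lt; auto). unfold rho. ring. }
  rewrite rsum_scal, rsum_minus in HK.
  assert (HK' : rsum n (fun i => phi w i * dl (next n i)) - rsum n (fun i => phi w i * dl i) = 0).
  { apply (Rmult_eq_reg_l (r * r)); [|nra]. rewrite Rmult_0_r. exact HK. }
  rewrite (rsum_ext n (fun i => phi w i * dl (next n i)) (fun i => if Nat.eqb i j then phi w i else 0)) in HK'.
  2:{ intros i Hi. unfold dl. destruct (Nat.eqb_spec (next n i) (next n j)) as [E|E];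
      destruct (Nat.eqb_spec i j) as [E'|E']; try ring.
      - exfalso. apply E'. eapply next_inj; eauto.
      - exfalso. apply E. subst. reflexivity. }
  rewrite (rsum_ext n (fun i => phi w i * dl i) (fun i => if Nat.eqb i (next n j) then phi w i else 0)) in HK'.
  2:{ intros i Hi. unfold dl. destruct (Nat.eqb_spec i (next n j)); ring. }
  rewrite !rsum_delta in HK' by auto. lra.
Qed.

Definition w0 := uvec (fun _ => 1).

Lemma phi_w0 i : Phi (fun _ => 1) = 0 -> (i < n)%nat ->
  phi w0 i = tau (fun _ => 1) i + 1 / mm i.
Proof.
  intros H Hi. pose proof (tau_step (fun _ => 1) i H Hi) as T. cbv beta in T.
  pose proof (Hcirc i Hi) as N1. pose proof (Hcirc _ (next_lt n i Hi)) as N2.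
  pose proof (Hm i Hi) as M. pose proof (Hel i Hi) as EL.
  unfold phi, w0, uvec. simpl.
  assert (Ex : ex i = px (next n i) - px i) by (unfold ex, px; ring).
  assert (Ey : ey i = py (next n i) - py i) by (unfold ey, py; ring).
  unfold elen in *. rewrite Ex, Ey in *.
  set (a := px i) in *. set (b := py i) in *. set (c := px (next n i)) in *. set (d := py (next n i)) in *.
  set (t := tau (fun _ => 1) i) in *. set (t' := tau (fun _ => 1) (next n i)) in *.
  assert (T' : t' = t + 2 / mm i) by (rewrite <- (Rplus_minus t t'); rewrite T; field; auto).
  apply (Rmult_eq_reg_r ((c - a) * (c - a) + (d - b) * (d - b))); auto.
  unfold Rdiv at 1. rewrite Rmult_assoc, Rinv_l, Rmult_1_r by auto.
  assert (K : (c - a) * (1 * d + t' * c - (1 * b + t * a)) - (d - b) * (1 * c - t' * d - (1 * a - t * b))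
     = (t + t') * ((c - a) * (c - a) + (d - b) * (d - b)) / 2 + (t' - t) * ((c*c+d*d) - (a*a+b*b)) / 2)
     by field.
  rewrite K, N1, N2, T'. field. auto.
Qed.

Lemma w0_tl : Phi (fun _ => 1) = 0 -> tlin w0.
Proof. intros H. apply uvec_tl. exact H. Qed.

Definition Gc (u : config) j := px j * snd (u j) - py j * fst (u j).

Lemma ss_alg (a b c d ux uy vx vy m : R) :
  a + c = - m * (d - b) -> b + d = m * (c - a) ->
  (c - a) * (vx - ux) + (d - b) * (vy - uy) = 0 ->
  (a * ux + b * uy) + (c * vx + d * vy) = m * ((c * vy - d * vx) - (a * uy - b * ux)).
Proof.
  intros C D T.
  assert (C0 : a + c + m * (d - b) = 0) by lra.
  assert (D0 : b + d - m * (c - a) = 0) by lra.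
  assert (K : 2 * ((a * ux + b * uy) + (c * vx + d * vy) - m * ((c * vy - d * vx) - (a * uy - b * ux)))
    = (m * m + 1) * ((c - a) * (vx - ux) + (d - b) * (vy - uy))
      + m * (- (a + c + m * (d - b)) * (vy - uy) + (b + d - m * (c - a)) * (vx - ux))
      + (a + c + m * (d - b)) * (ux + vx) + (b + d - m * (c - a)) * (uy + vy)) by ring.
  rewrite T, C0, D0 in K. lra.
Qed.

Lemma w0_term u i : Phi (fun _ => 1) = 0 -> tlin u -> (i < n)%nat ->
  phi w0 i * (sv u (next n i) - sv u i) =
  (tau (fun _ => 1) (next n i) * sv u (next n i) - tau (fun _ => 1) i * sv u i)
  - (Gc u (next n i) - Gc u i).
Proof.
  intros H Hu Hi. rewrite phi_w0 by auto.
  pose proof (tau_step (fun _ => 1) i H Hi) as T. cbv beta in T.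
  pose proof (Hm i Hi) as M. destruct (m_prop i Hi) as [C D].
  pose proof (Hu i Hi) as U.
  assert (Ex : ex i = px (next n i) - px i) by (unfold ex, px; ring).
  assert (Ey : ey i = py (next n i) - py i) by (unfold ey, py; ring).
  rewrite Ex, Ey in *.
  pose proof (ss_alg _ _ _ _ _ _ _ _ _ C D U) as S.
  assert (T' : tau (fun _ => 1) (next n i) = tau (fun _ => 1) i + 2 / mm i)
    by (rewrite <- (Rplus_minus (tau (fun _ => 1) i) (tau (fun _ => 1) (next n i))); rewrite T; field; auto).
  assert (S2 : sv u i + sv u (next n i) = mm i * (Gc u (next n i) - Gc u i)) by (unfold sv, Gc; exact S).
  rewrite T'. replace (Gc u (next n i) - Gc u i) with ((sv u i + sv u (next n i)) / mm i)
    by (rewrite S2; field; auto).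
  field. auto.
Qed.

Lemma w0_kernel u : Phi (fun _ => 1) = 0 -> tlin u -> rsum n (Tt w0 u) = 0.
Proof.
  intros H Hu. rewrite polar_sum by (apply w0_tl; auto).
  rewrite (rsum_ext n _ (fun i => (tau (fun _ => 1) (next n i) * sv u (next n i) - tau (fun _ => 1) i * sv u i)
     - (Gc u (next n i) - Gc u i))).
  2:{ intros i Hi. apply w0_term; auto. }
  rewrite rsum_minus, (rsum_tele n (fun j => tau (fun _ => 1) j * sv u j)), (rsum_tele n (Gc u)) by auto. ring.
Qed.

End Cyc.


Lemma tan_half_acos c : -1 < c < 1 ->
  tan (acos c / 2) = sqrt (1 - c²) / (1 + c).
Proof.
  intros Hc. pose proof (acos_bound_lt c Hc) as [A1 A2].
  set (th := acos c) in *.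
  assert (Hco : 0 < cos (th / 2)) by (apply cos_gt_0; lra).
  assert (Hs : sin th = 2 * sin (th / 2) * cos (th / 2)).
  { rewrite <- sin_2a. f_equal. field. }
  assert (Hcs : cos th = 2 * cos (th / 2) * cos (th / 2) - 1).
  { rewrite <- cos_2a_cos. f_equal. field. }
  assert (Cc : cos th = c) by (apply cos_acos; lra).
  assert (Sc : sin th = sqrt (1 - c²)) by (apply sin_acos; lra).
  rewrite <- Sc, <- Cc, Hs, Hcs. unfold tan. field. lra.
Qed.

Lemma eps_tan_R (x0 y0 x1 y1 ox oy r : R) :
  0 < r ->
  (ox - x0) ^ 2 + (oy - y0) ^ 2 = r ^ 2 ->
  (ox - x1) ^ 2 + (oy - y1) ^ 2 = r ^ 2 ->
  (x1 - x0) * (x1 - x0) + (y1 - y0) * (y1 - y0) <> 0 ->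
  (x0 - ox + (x1 - ox)) * (x0 - ox + (x1 - ox)) + (y0 - oy + (y1 - oy)) * (y0 - oy + (y1 - oy)) <> 0 ->
  (if Rlt_dec 0 ((x1 - x0) * (oy - y0) - (y1 - y0) * (ox - x0)) then 1 else -1) *
  tan (acos (((x0 - ox) * (x1 - ox) + (y0 - oy) * (y1 - oy)) /
             (sqrt ((x0 - ox) ^ 2 + (y0 - oy) ^ 2) * sqrt ((x1 - ox) ^ 2 + (y1 - oy) ^ 2))) / 2)
  = - / (((x1 - x0) * ((y0 - oy) + (y1 - oy)) - (y1 - y0) * ((x0 - ox) + (x1 - ox))) /
         ((x1 - x0) * (x1 - x0) + (y1 - y0) * (y1 - y0))).
Proof.
  intros Hr N0 N1 He Ha.
  set (a := x0 - ox) in *. set (b := y0 - oy) in *. set (c := x1 - ox) in *. set (d := y1 - oy) in *.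
  assert (Na : a * a + b * b = r * r) by (unfold a, b; nra).
  assert (Nc : c * c + d * d = r * r) by (unfold c, d; nra).
  assert (Sa : sqrt (a ^ 2 + b ^ 2) = r) by (replace (a ^ 2 + b ^ 2) with (r ^ 2) by (simpl; nra); apply sqrt_pow2; lra).
  assert (Sc : sqrt (c ^ 2 + d ^ 2) = r) by (replace (c ^ 2 + d ^ 2) with (r ^ 2) by (simpl; nra); apply sqrt_pow2; lra).
  rewrite Sa, Sc.
  replace (x1 - x0) with (c - a) in * by (unfold a, c; ring).
  replace (y1 - y0) with (d - b) in * by (unfold b, d; ring).
  replace (oy - y0) with (- b) by (unfold b; ring).
  replace (ox - x0) with (- a) by (unfold a; ring).
  set (C := a * c + b * d).
  set (X := a * d - b * c).
  assert (Lag : C * C + X * X = (r * r) * (r * r)) by (unfold C, X; transitivity ((a*a+b*b)*(c*c+d*d)); [ring|rewrite Na, Nc; ring]).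
  assert (E1 : (c - a) * (c - a) + (d - b) * (d - b) = 2 * (r * r) - 2 * C) by (unfold C; nra).
  assert (E2 : (a + c) * (a + c) + (b + d) * (b + d) = 2 * (r * r) + 2 * C) by (unfold C; nra).
  rewrite E1 in He. rewrite E2 in Ha.
  assert (Hr2 : 0 < r * r) by nra.
  assert (HX : X <> 0).
  { intro HX0. rewrite HX0 in Lag. assert ((C - r * r) * (C + r * r) = 0) by nra.
    destruct (Rmult_integral _ _ H); [apply He|apply Ha]; lra. }
  set (cc := C / (r * r)).
  assert (Ccc : C = cc * (r * r)) by (unfold cc; field; lra).
  assert (Hcc : -1 < cc < 1).
  { assert (C * C < (r * r) * (r * r)) by nra.
    split; apply (Rmult_lt_reg_r (r * r)); auto; rewrite <- Ccc; nra. }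
  rewrite tan_half_acos by exact Hcc.
  set (S := sqrt (1 - cc²)).
  assert (HS2 : S * S = 1 - cc * cc) by (unfold S; rewrite sqrt_sqrt; unfold Rsqr; nra).
  assert (HS : 0 < S) by (unfold S; apply sqrt_lt_R0; unfold Rsqr; nra).
  assert (XX : X * X = (r * r * S) * (r * r * S)).
  { replace ((r * r * S) * (r * r * S)) with ((r * r) * (r * r) * (S * S)) by ring.
    rewrite HS2. rewrite Ccc in Lag. nra. }
  assert (Num : (c - a) * (b + d) - (d - b) * (a + c) = - 2 * X) by (unfold X; ring).
  replace ((c - a) * (b + d) - (d - b) * (a + c)) with (- 2 * X) by (unfold X; ring).
  replace ((c - a) * - b - (d - b) * - a) with X by (unfold X; ring).
  rewrite E1, Ccc.
  assert (H1c : 1 + cc <> 0) by lra.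
  assert (H1c' : 1 - cc <> 0) by lra.
  destruct (Rlt_dec 0 X) as [Xp|Xn].
  - assert (XS : X = r * r * S).
    { apply Rsqr_inj; [lra| nra |]. unfold Rsqr. exact XX. }
    rewrite XS. field_simplify_eq; [|repeat split; try lra; nra].
    replace (S * S) with (1 - cc * cc) in * by (rewrite HS2; ring).
    nra.
  - assert (XS : X = - (r * r * S)).
    { assert (0 < - X) by lra.
      enough (- X = r * r * S) by lra.
      apply Rsqr_inj; [lra| nra |]. unfold Rsqr. nra. }
    rewrite XS. field_simplify_eq; [|repeat split; try lra; nra].
    nra.
Qed.


Definition C2ex (f : R -> R) := exists f1 f2, C2 f f1 f2.

Lemma X_const c : C2ex (fun _ => c).
Proof. do 2 eexists; apply C2_const. Qed.
Lemma X_id : C2ex (fun t => t).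
Proof. do 2 eexists; apply C2_id. Qed.
Lemma X_plus f g : C2ex f -> C2ex g -> C2ex (fun t => f t + g t).
Proof. intros [? [? A]] [? [? B]]. do 2 eexists; apply C2_plus; eauto. Qed.
Lemma X_minus f g : C2ex f -> C2ex g -> C2ex (fun t => f t - g t).
Proof. intros [? [? A]] [? [? B]]. do 2 eexists; apply C2_minus; eauto. Qed.
Lemma X_mult f g : C2ex f -> C2ex g -> C2ex (fun t => f t * g t).
Proof. intros [? [? A]] [? [? B]]. do 2 eexists; apply C2_mult; eauto. Qed.
Lemma X_comp h f : C2ex h -> C2ex f -> C2ex (fun t => h (f t)).
Proof. intros [? [? A]] [? [? B]]. do 2 eexists; apply C2_comp; eauto. Qed.
Lemma X_sin f : C2ex f -> C2ex (fun t => sin (f t)).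
Proof. intros [? [? A]]. do 2 eexists; apply (C2_comp sin); [apply C2_sin|eauto]. Qed.
Lemma X_cos f : C2ex f -> C2ex (fun t => cos (f t)).
Proof. intros [? [? A]]. do 2 eexists; apply (C2_comp cos); [apply C2_cos|eauto]. Qed.
Lemma X_inv f : (forall t, f t <> 0) -> C2ex f -> C2ex (fun t => / f t).
Proof. intros H [? [? A]]. do 2 eexists; apply C2_inv; eauto. Qed.
Lemma X_sqrt f : (forall t, 0 < f t) -> C2ex f -> C2ex (fun t => sqrt (f t)).
Proof. intros H [? [? A]]. do 2 eexists; apply C2_sqrt; eauto. Qed.
Lemma X_ext f g : (forall t, f t = g t) -> C2ex f -> C2ex g.
Proof. intros E [? [? A]]. do 2 eexists; eapply C2_ext; eauto. Qed.

Lemma X_rsum n (F : nat -> R -> R) : (forall i, (i < n)%nat -> C2ex (F i)) ->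
  C2ex (fun t => rsum n (fun i => F i t)).
Proof.
  induction n; intros H; simpl.
  - apply X_const.
  - apply X_plus. apply IHn. intros; apply H; lia. apply H; lia.
Qed.

Lemma build_vel n (g : R -> config) :
  (forall i, (i < n)%nat -> C2ex (fun t => fst (g t i)) /\ C2ex (fun t => snd (g t i))) ->
  exists g1, curve_vel n g g1.
Proof.
  intros H.
  assert (W : forall i, exists W : (R -> R) * (R -> R) * (R -> R) * (R -> R),
     (i < n)%nat -> C2 (fun t => fst (g t i)) (fst (fst (fst W))) (snd (fst (fst W))) /\
                    C2 (fun t => snd (g t i)) (snd (fst W)) (snd W)).
  { intros i. destruct (Nat.lt_ge_cases i n) as [Hi|Hi].
    - destruct (H i Hi) as [[a1 [a2 A]] [b1 [b2 B]]].
      exists (a1, a2, b1, b2). simpl. auto.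
    - exists ((fun _ => 0), (fun _ => 0), (fun _ => 0), (fun _ => 0)). intros; lia. }
  set (F := fun i => proj1_sig (constructive_indefinite_description _ (W i))).
  assert (FP : forall i, (i < n)%nat -> C2 (fun t => fst (g t i)) (fst (fst (fst (F i)))) (snd (fst (fst (F i)))) /\
                    C2 (fun t => snd (g t i)) (snd (fst (F i))) (snd (F i))).
  { intros i Hi. unfold F. destruct (constructive_indefinite_description _ (W i)) as [x Hx]. simpl. auto. }
  exists (fun t i => (fst (fst (fst (F i))) t, snd (fst (F i)) t)).
  exists (fun t i => (snd (fst (fst (F i))) t, snd (F i) t)).
  intros i Hi t. simpl. destruct (FP i Hi) as [A B].
  destruct (A t), (B t). auto.
Qed.

Lemma cont_pos (f : R -> R) x0 : continuity_pt f x0 -> 0 < f x0 ->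
  exists d, 0 < d /\ forall s, Rabs (s - x0) < d -> 0 < f s.
Proof.
  intros C P. destruct (C (f x0 / 2)) as [d [Hd Hs]]; [lra|].
  exists d. split; auto. intros s Hs'.
  destruct (Req_dec s x0) as [->|Ne]; [auto|].
  assert (K := Hs s). simpl in K. unfold R_dist, D_x, no_cond in K.
  assert (Rabs (f s - f x0) < f x0 / 2) by (apply K; split; auto).
  apply Rabs_def2 in H. lra.
Qed.

Lemma D_cont f x l : derivable_pt_lim f x l -> continuity_pt f x.
Proof. intros H. apply derivable_continuous_pt. exists l. exact H. Qed.


Section Curve.
Variables (n : nat) (P u : config) (l : nat -> R).
Hypothesis Hn3 : (3 <= n)%nat.
Hypothesis HL : in_L n l P.
Hypothesis Hel : forall i, (i < n)%nat -> elen n P i <> 0.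
Hypothesis Htl : tlin n P u.

Definition rate j := (ex n P j * (snd (u (next n j)) - snd (u j)) - ey n P j * (fst (u (next n j)) - fst (u j))) / elen n P j.

Definition Tx j s := if Nat.eqb j 0 then 0 else cos (s * rate j) * ex n P j - sin (s * rate j) * ey n P j - ex n P j.
Definition Ty j s := if Nat.eqb j 0 then 0 else sin (s * rate j) * ex n P j + cos (s * rate j) * ey n P j - ey n P j.
Definition Vx q s := fst (P q) + s * fst (u 1%nat) + rsum q (fun j => Tx j s).
Definition Vy q s := snd (P q) + s * snd (u 1%nat) + rsum q (fun j => Ty j s).

Lemma Tx_C2 j : C2ex (Tx j).
Proof.
  unfold Tx. destruct (Nat.eqb j 0). apply X_const.
  apply X_minus; [apply X_minus|apply X_const]; apply X_mult; try apply X_const;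
  [apply X_cos|apply X_sin]; apply X_mult; [apply X_id|apply X_const|apply X_id|apply X_const].
Qed.

Lemma Ty_C2 j : C2ex (Ty j).
Proof.
  unfold Ty. destruct (Nat.eqb j 0). apply X_const.
  apply X_minus; [apply X_plus|apply X_const]; apply X_mult; try apply X_const;
  [apply X_sin|apply X_cos]; apply X_mult; [apply X_id|apply X_const|apply X_id|apply X_const].
Qed.

Lemma Vx_C2 q : C2ex (Vx q).
Proof.
  unfold Vx. apply X_plus; [apply X_plus|]. apply X_const. apply X_mult; [apply X_id|apply X_const].
  apply (X_rsum q (fun j s => Tx j s)). intros; apply Tx_C2.
Qed.

Lemma Vy_C2 q : C2ex (Vy q).
Proof.
  unfold Vy. apply X_plus; [apply X_plus|]. apply X_const. apply X_mult; [apply X_id|apply X_const].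
  apply (X_rsum q (fun j s => Ty j s)). intros; apply Ty_C2.
Qed.

Lemma Vx0 q : Vx q 0 = fst (P q).
Proof.
  unfold Vx. rewrite (rsum_ext q _ (fun _ => 0)); [rewrite rsum_0; ring|].
  intros j _. unfold Tx. destruct (Nat.eqb j 0); [reflexivity|].
  rewrite Rmult_0_l, cos_0, sin_0. ring.
Qed.

Lemma Vy0 q : Vy q 0 = snd (P q).
Proof.
  unfold Vy. rewrite (rsum_ext q _ (fun _ => 0)); [rewrite rsum_0; ring|].
  intros j _. unfold Ty. destruct (Nat.eqb j 0); [reflexivity|].
  rewrite Rmult_0_l, cos_0, sin_0. ring.
Qed.

Lemma DTx j : derivable_pt_lim (Tx j) 0 (if Nat.eqb j 0 then 0 else - rate j * ey n P j).
Proof.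
  unfold Tx. destruct (Nat.eqb j 0). apply D_const.
  eapply D_eqv; [|apply D_minus; [apply D_minus|apply D_const]; apply D_mult;
     [apply (D_comp cos (fun s => s * rate j)); [eapply D_eqv;[|apply D_mult;[apply D_id|apply D_const]]|apply derivable_pt_lim_cos]|apply D_const
     |apply (D_comp sin (fun s => s * rate j)); [eapply D_eqv;[|apply D_mult;[apply D_id|apply D_const]]|apply derivable_pt_lim_sin]|apply D_const]].
  all: try reflexivity.
  rewrite Rmult_0_l, sin_0, cos_0. ring.
Qed.

Lemma DTy j : derivable_pt_lim (Ty j) 0 (if Nat.eqb j 0 then 0 else rate j * ex n P j).
Proof.
  unfold Ty. destruct (Nat.eqb j 0). apply D_const.
  eapply D_eqv; [|apply D_minus; [apply D_plus|apply D_const]; apply D_mult;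
     [apply (D_comp sin (fun s => s * rate j)); [eapply D_eqv;[|apply D_mult;[apply D_id|apply D_const]]|apply derivable_pt_lim_sin]|apply D_const
     |apply (D_comp cos (fun s => s * rate j)); [eapply D_eqv;[|apply D_mult;[apply D_id|apply D_const]]|apply derivable_pt_lim_cos]|apply D_const]].
  all: try reflexivity.
  rewrite Rmult_0_l, sin_0, cos_0. ring.
Qed.

Lemma rate_dec j : (j < n)%nat ->
  fst (u (next n j)) - fst (u j) = - rate j * ey n P j /\
  snd (u (next n j)) - snd (u j) = rate j * ex n P j.
Proof.
  intros Hj. unfold rate, elen. apply perp_decomp. apply Htl; auto. apply Hel; auto.
Qed.

Lemma DV q : (1 <= q)%nat -> (q < n)%nat ->
  derivable_pt_lim (Vx q) 0 (fst (u q)) /\ derivable_pt_lim (Vy q) 0 (snd (u q)).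
Proof.
  intros H1 H2.
  assert (Sx : fst (u 1%nat) + rsum q (fun j => if Nat.eqb j 0 then 0 else - rate j * ey n P j) = fst (u q) /\
               snd (u 1%nat) + rsum q (fun j => if Nat.eqb j 0 then 0 else rate j * ex n P j) = snd (u q)).
  { induction q as [|q IH]; [lia|].
    destruct (Nat.eq_dec q 0) as [->|Hq].
    - simpl. split; ring.
    - destruct IH as [IHx IHy]; try lia. simpl rsum.
      destruct (Nat.eqb_spec q 0); [lia|].
      destruct (rate_dec q ltac:(lia)) as [A B]. rewrite (next_S n q) in A, B by lia.
      split; lra. }
  destruct Sx as [Sx Sy]. split.
  - unfold Vx. rewrite <- Sx. apply D_plus. eapply D_eqv; [|apply D_plus; [apply D_const|apply D_mult; [apply D_id|apply D_const]]]. cbv beta; ring.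
    apply (D_rsum q (fun j s => Tx j s)). intros; apply DTx.
  - unfold Vy. rewrite <- Sy. apply D_plus. eapply D_eqv; [|apply D_plus; [apply D_const|apply D_mult; [apply D_id|apply D_const]]]. cbv beta; ring.
    apply (D_rsum q (fun j s => Ty j s)). intros; apply DTy.
Qed.

Lemma V_edge q s : (1 <= q)%nat -> (S q < n)%nat ->
  sqd (Vx q s, Vy q s) (Vx (S q) s, Vy (S q) s) = l q * l q.
Proof.
  intros H1 H2.
  assert (Ex : ex n P q = fst (P (S q)) - fst (P q)) by (unfold ex; rewrite next_S by lia; reflexivity).
  assert (Ey : ey n P q = snd (P (S q)) - snd (P q)) by (unfold ey; rewrite next_S by lia; reflexivity).
  pose proof (inL_sq n l P q HL ltac:(lia)) as E. rewrite next_S in E by lia.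
  unfold sqd in *. simpl. unfold Vx, Vy. simpl rsum.
  unfold Tx, Ty. destruct (Nat.eqb_spec q 0); [lia|].
  rewrite <- E. rewrite Ex, Ey.
  set (c := cos (s * rate q)). set (sn := sin (s * rate q)).
  assert (CS : sn * sn + c * c = 1) by (unfold sn, c; rewrite <- !Rsqr_def; apply sin2_cos2).
  set (X := fst (P (S q)) - fst (P q)). set (Y := snd (P (S q)) - snd (P q)).
  replace (fst (P q) + s * fst (u 1%nat) + rsum q (fun j => Tx j s) -
           (fst (P (S q)) + s * fst (u 1%nat) + (rsum q (fun j => Tx j s) + (c * X - sn * Y - X))))
    with (- (c * X - sn * Y)) by (unfold X; ring).
  replace (snd (P q) + s * snd (u 1%nat) + rsum q (fun j => Ty j s) -
           (snd (P (S q)) + s * snd (u 1%nat) + (rsum q (fun j => Ty j s) + (sn * X + c * Y - Y))))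
    with (- (sn * X + c * Y)) by (unfold Y; ring).
  unfold X, Y. nra.
Qed.

Lemma inter_alg (ax ay bx by0 aa bb h : R) :
  let dX := bx - ax in let dY := by0 - ay in let D := dX * dX + dY * dY in
  let x := (D + aa - bb) * / (2 * D) in
  0 < D -> h * h = aa * / D - x * x ->
  (ax - (ax + x * dX - h * dY)) * (ax - (ax + x * dX - h * dY)) +
  (ay - (ay + x * dY + h * dX)) * (ay - (ay + x * dY + h * dX)) = aa /\
  ((ax + x * dX - h * dY) - bx) * ((ax + x * dX - h * dY) - bx) +
  ((ay + x * dY + h * dX) - by0) * ((ay + x * dY + h * dX) - by0) = bb.
Proof.
  intros dX dY D x HD Hh.
  assert (K1 : (ax - (ax + x * dX - h * dY)) * (ax - (ax + x * dX - h * dY)) +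
    (ay - (ay + x * dY + h * dX)) * (ay - (ay + x * dY + h * dX)) = (x * x + h * h) * D)
    by (unfold D; ring).
  assert (K2 : ((ax + x * dX - h * dY) - bx) * ((ax + x * dX - h * dY) - bx) +
    ((ay + x * dY + h * dX) - by0) * ((ay + x * dY + h * dX) - by0) = ((x - 1) * (x - 1) + h * h) * D)
    by (unfold D, dX, dY; ring).
  rewrite K1, K2. split.
  - rewrite Hh. field. lra.
  - replace ((x - 1) * (x - 1) + h * h) with ((x * x + h * h) - 2 * x + 1) by ring.
    rewrite Hh. unfold x. field. lra.
Qed.

Hypothesis Htri : (fst (P 0%nat) - fst (P (n - 1)%nat)) * (snd (P 1%nat) - snd (P 0%nat)) -
                  (snd (P 0%nat) - snd (P (n - 1)%nat)) * (fst (P 1%nat) - fst (P 0%nat)) <> 0.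

Definition Ax s := Vx (n - 1) s.
Definition Ay s := Vy (n - 1) s.
Definition Bx s := Vx 1 s.
Definition By s := Vy 1 s.
Definition dXs s := Bx s - Ax s.
Definition dYs s := By s - Ay s.
Definition Ds s := dXs s * dXs s + dYs s * dYs s.
Definition aa := l (n - 1)%nat * l (n - 1)%nat.
Definition bb := l 0%nat * l 0%nat.
Definition xx s := (Ds s + aa - bb) * / (2 * Ds s).
Definition Ys s := aa * / Ds s - xx s * xx s.
Definition h0 := ((snd (P 0%nat) - Ay 0) * dXs 0 - (fst (P 0%nat) - Ax 0) * dYs 0) / Ds 0.
Definition hh s := h0 * sqrt (Ys s * / Ys 0).
Definition v0x s := Ax s + xx s * dXs s - hh s * dYs s.
Definition v0y s := Ay s + xx s * dYs s + hh s * dXs s.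

Lemma facts0 :
  Ds 0 <> 0 /\ 0 < Ds 0 /\ h0 <> 0 /\ Ys 0 = h0 * h0 /\ v0x 0 = fst (P 0%nat) /\ v0y 0 = snd (P 0%nat).
Proof.
  assert (Hn1 : next n (n - 1) = 0%nat) by (apply next_last; lia).
  assert (Hn0 : next n 0 = 1%nat) by (apply next_S; lia).
  pose proof (inL_sq n l P (n - 1) HL ltac:(lia)) as La. rewrite Hn1 in La.
  pose proof (inL_sq n l P 0 HL ltac:(lia)) as Lb. rewrite Hn0 in Lb.
  unfold sqd in La, Lb.
  unfold v0x, v0y, hh, h0, Ys, xx, Ds, dXs, dYs, Ax, Ay, Bx, By, aa, bb.
  rewrite !Vx0, !Vy0. rewrite <- La, <- Lb.
  set (x0 := fst (P 0%nat)) in *. set (y0 := snd (P 0%nat)) in *.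
  set (x1 := fst (P 1%nat)) in *. set (y1 := snd (P 1%nat)) in *.
  set (xa := fst (P (n - 1)%nat)) in *. set (ya := snd (P (n - 1)%nat)) in *.
  set (D := (x1 - xa) * (x1 - xa) + (y1 - ya) * (y1 - ya)).
  assert (HD : D <> 0).
  { intro E. apply Htri. unfold D in E.
    destruct (Rplus_sqr_eq_0 (x1 - xa) (y1 - ya)) as [E1 E2]; [unfold Rsqr; exact E|].
    replace x1 with xa by lra. replace y1 with ya by lra. ring. }
  assert (HD' : 0 < D).
  { assert (0 <= D) by (unfold D; apply Rplus_le_le_0_compat; apply Rle_0_sqr). lra. }
  set (h := ((y0 - ya) * (x1 - xa) - (x0 - xa) * (y1 - ya)) / D).
  assert (Hh : h <> 0).
  { unfold h. intro E. apply Htri. unfold Rdiv in E. apply Rmult_integral in E. destruct E as [E|E].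
    - lra.
    - exfalso. apply (Rinv_neq_0_compat D HD). exact E. }
  assert (HY : ((xa - x0) * (xa - x0) + (ya - y0) * (ya - y0)) * / D -
     (D + ((xa - x0) * (xa - x0) + (ya - y0) * (ya - y0)) - ((x0 - x1) * (x0 - x1) + (y0 - y1) * (y0 - y1))) * / (2 * D) *
     ((D + ((xa - x0) * (xa - x0) + (ya - y0) * (ya - y0)) - ((x0 - x1) * (x0 - x1) + (y0 - y1) * (y0 - y1))) * / (2 * D))
     = h * h).
  { unfold h, D. field. exact HD. }
  rewrite HY. rewrite Rinv_r by (apply Rmult_integral_contrapositive; auto). rewrite sqrt_1, Rmult_1_r.
  split; [exact HD|]. split; [exact HD'|]. split; [exact Hh|]. split; [reflexivity|].
  split; unfold h, D; field; exact HD.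
Qed.

Lemma Ds_C2 : C2ex Ds.
Proof.
  unfold Ds, dXs, dYs, Ax, Ay, Bx, By.
  apply X_plus; apply X_mult; apply X_minus; first [apply Vx_C2|apply Vy_C2].
Qed.

Lemma delta_exists : exists dl, 0 < dl /\ forall s, Rabs (s - 0) < dl -> 0 < Ds s /\ 0 < Ys s.
Proof.
  destruct facts0 as [HD0 [HD0' [Hh0 [HY0 _]]]].
  destruct Ds_C2 as [f1 [f2 C]].
  assert (DD : derivable_pt_lim Ds 0 (f1 0)) by (apply C).
  assert (DY : exists v, derivable_pt_lim Ys 0 v).
  { eexists. unfold Ys, xx.
    apply D_minus; [apply D_mult; [apply D_const|]|apply D_mult; apply D_mult];
    try (apply (D_comp (fun y => / y)); [exact DD|apply D_inv_raw; exact HD0]);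
    try (apply D_minus; [apply D_plus; [exact DD|apply D_const]|apply D_const]);
    try (apply (D_comp (fun y => / y) (fun s => 2 * Ds s));
         [apply D_mult; [apply D_const|exact DD]|apply D_inv_raw; lra]). }
  destruct DY as [v DY].
  destruct (cont_pos Ds 0 (D_cont _ _ _ DD) HD0') as [d1 [Hd1 P1]].
  assert (HY : 0 < Ys 0) by (rewrite HY0; nra).
  destruct (cont_pos Ys 0 (D_cont _ _ _ DY) HY) as [d2 [Hd2 P2]].
  exists (Rmin d1 d2). split; [apply Rmin_pos; auto|].
  intros s Hs. split; [apply P1|apply P2]; eapply Rlt_le_trans; eauto; [apply Rmin_l|apply Rmin_r].
Qed.

Definition sg (dl t : R) := dl / 2 * sin (2 / dl * t).

Lemma sg_C2 dl : C2ex (sg dl).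
Proof. unfold sg. apply X_mult; [apply X_const|apply X_sin; apply X_mult; [apply X_const|apply X_id]]. Qed.

Lemma sg_0 dl : sg dl 0 = 0.
Proof. unfold sg. rewrite Rmult_0_r, sin_0. ring. Qed.

Lemma sg_D0 dl : 0 < dl -> derivable_pt_lim (sg dl) 0 1.
Proof.
  intros H. unfold sg. eapply D_eqv; [|apply D_mult; [apply D_const|apply (D_comp sin (fun t => 2 / dl * t))]].
  3:{ apply derivable_pt_lim_sin. }
  2:{ apply D_mult; [apply D_const|apply D_id]. }
  cbv beta. rewrite Rmult_0_r, cos_0. field. lra.
Qed.

Lemma sg_bound dl t : 0 < dl -> Rabs (sg dl t - 0) < dl.
Proof.
  intros H. unfold sg. rewrite Rminus_0_r, Rabs_mult.
  pose proof (SIN_bound (2 / dl * t)) as [S1 S2].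
  assert (Rabs (sin (2 / dl * t)) <= 1) by (apply Rabs_le; lra).
  rewrite Rabs_right by lra.
  assert (0 <= Rabs (sin (2 / dl * t))) by apply Rabs_pos. nra.
Qed.

Definition gc (dl t : R) (i : nat) : R * R :=
  if Nat.eqb i 0 then (v0x (sg dl t), v0y (sg dl t)) else (Vx i (sg dl t), Vy i (sg dl t)).

Lemma dist_sqd p q : Defs.dist p q = sqrt (sqd p q).
Proof. unfold Defs.dist, sqd. f_equal. ring. Qed.

Lemma hh_sq s : 0 <= Ys s -> hh s * hh s = Ys s.
Proof.
  intros H. destruct facts0 as [_ [_ [Hh0 [HY0 _]]]].
  unfold hh. replace (h0 * sqrt (Ys s * / Ys 0) * (h0 * sqrt (Ys s * / Ys 0)))
    with (h0 * h0 * (sqrt (Ys s * / Ys 0) * sqrt (Ys s * / Ys 0))) by ring.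
  rewrite sqrt_sqrt.
  - rewrite HY0. field. exact Hh0.
  - apply Rmult_le_pos; auto. rewrite HY0. left. apply Rinv_0_lt_compat. nra.
Qed.

Lemma edges_s s : 0 < Ds s -> 0 < Ys s ->
  sqd (Ax s, Ay s) (v0x s, v0y s) = aa /\ sqd (v0x s, v0y s) (Bx s, By s) = bb.
Proof.
  intros HD HY. unfold sqd. simpl. unfold v0x, v0y.
  apply (inter_alg (Ax s) (Ay s) (Bx s) (By s) aa bb (hh s)).
  - exact HD.
  - rewrite hh_sq by lra. reflexivity.
Qed.

Definition dgood dl := 0 < dl /\ forall s, Rabs (s - 0) < dl -> 0 < Ds s /\ 0 < Ys s.

Lemma gc_inL dl t : dgood dl -> in_L n l (gc dl t).
Proof.
  intros [Hdl Hpos].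
  destruct (Hpos (sg dl t) (sg_bound dl t Hdl)) as [HD HY].
  destruct (edges_s (sg dl t) HD HY) as [Ea Eb].
  intros i Hi. rewrite dist_sqd.
  assert (Hl : 0 <= l i) by (apply (inL_nonneg n l P); auto).
  rewrite <- (sqrt_square (l i) Hl). f_equal.
  unfold gc.
  destruct (Nat.eq_dec i 0) as [->|Hi0].
  - rewrite next_S by lia. simpl. exact Eb.
  - destruct (Nat.eq_dec (S i) n) as [E|E].
    + rewrite (next_last n i E). simpl.
      destruct (Nat.eqb_spec i 0); [lia|].
      replace i with (n - 1)%nat by lia. exact Ea.
    + rewrite (next_S n i) by lia.
      destruct (Nat.eqb_spec i 0); [lia|]. simpl.
      apply V_edge; lia.
Qed.

Section WithDl.
Variable dl : R.
Hypothesis Hdl : dgood dl.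

Lemma Dsg_pos t : 0 < Ds (sg dl t) /\ 0 < Ys (sg dl t).
Proof. destruct Hdl as [H1 H2]. apply H2. apply sg_bound; auto. Qed.

Lemma Vx_sg i : C2ex (fun t => Vx i (sg dl t)).
Proof. apply X_comp; [apply Vx_C2|apply sg_C2]. Qed.
Lemma Vy_sg i : C2ex (fun t => Vy i (sg dl t)).
Proof. apply X_comp; [apply Vy_C2|apply sg_C2]. Qed.
Lemma Ds_sg : C2ex (fun t => Ds (sg dl t)).
Proof. apply X_comp; [apply Ds_C2|apply sg_C2]. Qed.

Lemma xx_sg : C2ex (fun t => xx (sg dl t)).
Proof.
  unfold xx. apply X_mult.
  - apply X_minus; [apply X_plus; [apply Ds_sg|apply X_const]|apply X_const].
  - apply X_inv. { intro t. pose proof (Dsg_pos t). lra. }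
    apply X_mult; [apply X_const|apply Ds_sg].
Qed.

Lemma Ys_sg : C2ex (fun t => Ys (sg dl t)).
Proof.
  unfold Ys. apply X_minus.
  - apply X_mult; [apply X_const|]. apply X_inv. { intro t. pose proof (Dsg_pos t). lra. } apply Ds_sg.
  - apply X_mult; apply xx_sg.
Qed.

Lemma hh_sg : C2ex (fun t => hh (sg dl t)).
Proof.
  unfold hh. apply X_mult; [apply X_const|]. apply X_sqrt.
  - intro t. destruct facts0 as [_ [_ [Hh0 [HY0 _]]]]. pose proof (Dsg_pos t) as [_ Y].
    apply Rmult_lt_0_compat; auto. apply Rinv_0_lt_compat. rewrite HY0. nra.
  - apply X_mult; [apply Ys_sg|apply X_const].
Qed.

Lemma v0x_sg : C2ex (fun t => v0x (sg dl t)).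
Proof.
  unfold v0x, dXs, dYs, Ax, Bx, Ay, By.
  apply X_minus; [apply X_plus; [apply Vx_sg|apply X_mult; [apply xx_sg|apply X_minus; apply Vx_sg]]|
                  apply X_mult; [apply hh_sg|apply X_minus; apply Vy_sg]].
Qed.

Lemma v0y_sg : C2ex (fun t => v0y (sg dl t)).
Proof.
  unfold v0y, dXs, dYs, Ax, Bx, Ay, By.
  apply X_plus; [apply X_plus; [apply Vy_sg|apply X_mult; [apply xx_sg|apply X_minus; apply Vy_sg]]|
                  apply X_mult; [apply hh_sg|apply X_minus; apply Vx_sg]].
Qed.

Lemma gc_C2 i : C2ex (fun t => fst (gc dl t i)) /\ C2ex (fun t => snd (gc dl t i)).
Proof.
  unfold gc. destruct (Nat.eqb i 0); simpl.
  - split; [apply v0x_sg|apply v0y_sg].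
  - split; [apply Vx_sg|apply Vy_sg].
Qed.

Lemma gc_vel_nz i : (1 <= i)%nat -> (i < n)%nat ->
  derivable_pt_lim (fun t => fst (gc dl t i)) 0 (fst (u i)) /\
  derivable_pt_lim (fun t => snd (gc dl t i)) 0 (snd (u i)).
Proof.
  intros H1 H2. destruct (DV i H1 H2) as [A B]. destruct Hdl as [Hd _].
  unfold gc. destruct (Nat.eqb_spec i 0); [lia|]. simpl.
  split; (eapply D_eqv; [|apply D_comp; [apply sg_D0; exact Hd|rewrite sg_0; eauto]]); ring.
Qed.

Lemma tangent0 : tangent n l P u.
Proof.
  destruct (build_vel n (gc dl)) as [g1 Hcv]. { intros; apply gc_C2. }
  exists (gc dl), g1. split; [exact Hcv|]. split; [intro t; apply gc_inL; exact Hdl|].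
  destruct facts0 as [_ [_ [_ [_ [Px Py]]]]].
  assert (Pos : agree n (gc dl 0) P).
  { intros i Hi. unfold gc. rewrite sg_0. destruct (Nat.eqb_spec i 0) as [->|].
    - rewrite Px, Py. destruct (P 0%nat); reflexivity.
    - rewrite Vx0, Vy0. destruct (P i); reflexivity. }
  split; [exact Pos|].
  assert (HD0 : HD n (gc dl) 0 (g1 0)).
  { destruct Hcv as [g2 Hc]. intros i Hi. destruct (Hc i Hi 0) as [? [? _]]. auto. }
  assert (Vnz : forall i, (1 <= i)%nat -> (i < n)%nat -> g1 0 i = u i).
  { intros i H1 H2. destruct (gc_vel_nz i H1 H2) as [A B]. destruct (HD0 i H2) as [A' B'].
    rewrite (surjective_pairing (g1 0 i)), (surjective_pairing (u i)).
    f_equal; eapply uniqueness_limite; eauto. }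
  intros i Hi. destruct (Nat.eq_dec i 0) as [->|Hi0]; [|apply Vnz; lia].
  pose proof (cv_tan n l (gc dl) g1 Hcv (fun t => gc_inL dl t Hdl) 0 (n - 1) ltac:(lia)) as T1.
  pose proof (cv_tan n l (gc dl) g1 Hcv (fun t => gc_inL dl t Hdl) 0 0 ltac:(lia)) as T2.
  rewrite (next_last n (n - 1)) in T1 by lia. rewrite (next_S n 0) in T2 by lia.
  rewrite !Pos in T1, T2 by lia. rewrite (Vnz (n - 1)%nat) in T1 by lia. rewrite (Vnz 1%nat) in T2 by lia.
  pose proof (Htl (n - 1)%nat ltac:(lia)) as U1. pose proof (Htl 0%nat ltac:(lia)) as U2.
  unfold ex, ey in U1, U2. rewrite (next_last n (n - 1)) in U1 by lia. rewrite (next_S n 0) in U2 by lia.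
  unfold dsq in T1, T2.
  rewrite (surjective_pairing (g1 0 0%nat)), (surjective_pairing (u 0%nat)).
  set (zx := fst (g1 0 0%nat)) in *. set (zy := snd (g1 0 0%nat)) in *.
  set (v1x := fst (P 0%nat) - fst (P (n - 1)%nat)). set (v1y := snd (P 0%nat) - snd (P (n - 1)%nat)).
  set (v2x := fst (P 1%nat) - fst (P 0%nat)). set (v2y := snd (P 1%nat) - snd (P 0%nat)).
  assert (I1 : v1x * (zx - fst (u 0%nat)) + v1y * (zy - snd (u 0%nat)) = 0) by (unfold v1x, v1y; lra).
  assert (I2 : v2x * (zx - fst (u 0%nat)) + v2y * (zy - snd (u 0%nat)) = 0) by (unfold v2x, v2y; lra).
  assert (Cr : v1x * v2y - v1y * v2x <> 0) by (unfold v1x, v1y, v2x, v2y; exact Htri).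
  assert (K1 : (v1x * v2y - v1y * v2x) * (zx - fst (u 0%nat)) =
     v2y * (v1x * (zx - fst (u 0%nat)) + v1y * (zy - snd (u 0%nat))) - v1y * (v2x * (zx - fst (u 0%nat)) + v2y * (zy - snd (u 0%nat)))) by ring.
  assert (K2 : (v1x * v2y - v1y * v2x) * (zy - snd (u 0%nat)) =
     v1x * (v2x * (zx - fst (u 0%nat)) + v2y * (zy - snd (u 0%nat))) - v2x * (v1x * (zx - fst (u 0%nat)) + v1y * (zy - snd (u 0%nat)))) by ring.
  rewrite I1, I2 in K1, K2.
  rewrite !Rmult_0_r, Rminus_0_r in K1, K2.
  f_equal.
  - apply Rmult_integral in K1 as [K1|K1]; [contradiction|]. lra.
  - apply Rmult_integral in K2 as [K2|K2]; [contradiction|]. lra.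
Qed.

End WithDl.

Lemma tangent_exists : tangent n l P u.
Proof.
  destruct delta_exists as [dl [H1 H2]].
  apply (tangent0 dl). split; auto.
Qed.

End Curve.


Definition sh (n q i : nat) : nat := if Nat.ltb (i + q) n then (i + q)%nat else (i + q - n)%nat.

Lemma sh_lt n q i : (q <= n)%nat -> (i < n)%nat -> (sh n q i < n)%nat.
Proof. intros. unfold sh. destruct (Nat.ltb_spec (i + q) n); lia. Qed.

Lemma sh_next n q i : (q <= n)%nat -> (i < n)%nat -> next n (sh n q i) = sh n q (next n i).
Proof.
  intros Hq Hi. unfold sh.
  destruct (Nat.eq_dec (S i) n) as [E|E];
  [rewrite (next_last n i E)|rewrite (next_S n i) by lia];
  repeat match goal with |- context [Nat.ltb ?a ?b] => destruct (Nat.ltb_spec a b) end;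
  match goal with |- next n ?x = _ => destruct (Nat.eq_dec (S x) n);
    [rewrite (next_last n x) by lia | rewrite (next_S n x) by lia] end; lia.
Qed.

Lemma sh_inv n p i : (p < n)%nat -> (i < n)%nat -> sh n p (sh n (n - p) i) = i.
Proof.
  intros Hp Hi. unfold sh.
  destruct (Nat.ltb_spec (i + (n - p)) n); destruct (Nat.ltb_spec (i + (n - p) + p) n);
  destruct (Nat.ltb_spec (i + (n - p) - n + p) n); lia.
Qed.

Lemma tangent_gen n l (P u : config) k :
  (3 <= n)%nat -> in_L n l P -> (forall i, (i < n)%nat -> elen n P i <> 0) -> tlin n P u ->
  (k < n)%nat ->
  (fst (P (next n k)) - fst (P k)) * (snd (P (next n (next n k))) - snd (P (next n k))) -
  (snd (P (next n k)) - snd (P k)) * (fst (P (next n (next n k))) - fst (P (next n k))) <> 0 ->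
  tangent n l P u.
Proof.
  intros Hn3 HL Hel Htl Hk Htri.
  set (p := next n k).
  assert (Hp : (p < n)%nat) by (apply next_lt; auto).
  set (Q := fun i => P (sh n p i)). set (l' := fun i => l (sh n p i)). set (u' := fun i => u (sh n p i)).
  assert (Sn : forall i, (i < n)%nat -> next n (sh n p i) = sh n p (next n i)) by (intros; apply sh_next; lia).
  assert (Sl : forall i, (i < n)%nat -> (sh n p i < n)%nat) by (intros; apply sh_lt; lia).
  assert (HLQ : in_L n l' Q).
  { intros i Hi. unfold Q, l'. rewrite <- Sn by auto. apply HL. auto. }
  assert (HelQ : forall i, (i < n)%nat -> elen n Q i <> 0).
  { intros i Hi. unfold elen, ex, ey, Q. rewrite <- Sn by auto. apply Hel. auto. }
  assert (HtlQ : tlin n Q u').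
  { intros i Hi. unfold ex, ey, Q, u'. rewrite <- Sn by auto. apply Htl. auto. }
  assert (Sh1 : sh n p (n - 1) = k).
  { unfold p. destruct (Nat.eq_dec (S k) n) as [E|E].
    - rewrite next_last by auto. unfold sh. destruct (Nat.ltb_spec (n - 1 + 0) n); lia.
    - rewrite next_S by lia. unfold sh. destruct (Nat.ltb_spec (n - 1 + S k) n); lia. }
  assert (Sh0 : sh n p 0 = p) by (unfold sh; destruct (Nat.ltb_spec (0 + p) n); lia).
  assert (Sh1' : sh n p 1 = next n p).
  { pose proof (Sn 0%nat ltac:(lia)) as E. rewrite Sh0, (next_S n 0) in E by lia. auto. }
  assert (HtriQ : (fst (Q 0%nat) - fst (Q (n - 1)%nat)) * (snd (Q 1%nat) - snd (Q 0%nat)) -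
                  (snd (Q 0%nat) - snd (Q (n - 1)%nat)) * (fst (Q 1%nat) - fst (Q 0%nat)) <> 0).
  { unfold Q. rewrite Sh0, Sh1, Sh1'. exact Htri. }
  destruct (tangent_exists n Q u' l' Hn3 HLQ HelQ HtlQ HtriQ) as [h [h1 [[h2 Hc] [HLh [A0 A1]]]]].
  set (q := (n - p)%nat).
  assert (Sq : forall i, (i < n)%nat -> (sh n q i < n)%nat) by (intros; apply sh_lt; lia).
  assert (Snq : forall i, (i < n)%nat -> next n (sh n q i) = sh n q (next n i)) by (intros; apply sh_next; lia).
  assert (Inv : forall i, (i < n)%nat -> sh n p (sh n q i) = i) by (intros; apply sh_inv; auto).
  exists (fun t i => h t (sh n q i)).
  exists (fun t i => h1 t (sh n q i)). split.
  - exists (fun t i => h2 t (sh n q i)). intros i Hi t. apply (Hc (sh n q i) (Sq i Hi) t).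
  - split; [|split].
    + intros t i Hi. rewrite <- Snq by auto. rewrite (HLh t (sh n q i) (Sq i Hi)). unfold l'. rewrite Inv; auto.
    + intros i Hi. rewrite (A0 _ (Sq i Hi)). unfold Q. rewrite Inv; auto.
    + intros i Hi. rewrite (A1 _ (Sq i Hi)). unfold u'. rewrite Inv; auto.
Qed.


Lemma circle3 (ax ay bx by0 cx cy ox oy r2 : R) :
  (ax - ox) * (ax - ox) + (ay - oy) * (ay - oy) = r2 ->
  (bx - ox) * (bx - ox) + (by0 - oy) * (by0 - oy) = r2 ->
  (cx - ox) * (cx - ox) + (cy - oy) * (cy - oy) = r2 ->
  (bx - ax) * (bx - ax) + (by0 - ay) * (by0 - ay) <> 0 ->
  (cx - bx) * (cx - bx) + (cy - by0) * (cy - by0) <> 0 ->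
  (bx - ax) * (cy - by0) - (by0 - ay) * (cx - bx) = 0 ->
  ax = cx /\ ay = cy.
Proof.
  intros NA NB NC Hd Hv Cr.
  set (dx := bx - ax) in *. set (dy := by0 - ay) in *.
  set (vx := cx - bx) in *. set (vy := cy - by0) in *.
  set (E := dx * dx + dy * dy) in *.
  set (t := (vx * dx + vy * dy) / E).
  assert (Vx : vx = t * dx).
  { unfold t. apply (Rmult_eq_reg_r E); auto. unfold Rdiv.
    replace ((vx * dx + vy * dy) * / E * dx * E) with ((vx * dx + vy * dy) * dx) by (field; auto).
    unfold E. assert (K : vx * (dx*dx+dy*dy) - (vx*dx + vy*dy)*dx = - dy * (dx*vy - dy*vx)) by ring.
    rewrite Cr in K. lra. }
  assert (Vy : vy = t * dy).
  { unfold t. apply (Rmult_eq_reg_r E); auto. unfold Rdiv.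
    replace ((vx * dx + vy * dy) * / E * dy * E) with ((vx * dx + vy * dy) * dy) by (field; auto).
    unfold E. assert (K : vy * (dx*dx+dy*dy) - (vx*dx + vy*dy)*dy = dx * (dx*vy - dy*vx)) by ring.
    rewrite Cr in K. lra. }
  assert (G1 : 2 * ((bx - ox) * dx + (by0 - oy) * dy) - E = 0).
  { assert (ax = bx - dx) by (unfold dx; ring). assert (ay = by0 - dy) by (unfold dy; ring).
    rewrite H, H0 in NA. unfold E. nra. }
  assert (G2 : 2 * ((bx - ox) * vx + (by0 - oy) * vy) + (vx * vx + vy * vy) = 0).
  { assert (cx = bx + vx) by (unfold vx; ring). assert (cy = by0 + vy) by (unfold vy; ring).
    rewrite H, H0 in NC. nra. }
  rewrite Vx, Vy in G2, Hv.
  assert (G3 : t * (1 + t) * E = 0).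
  { replace (t * (1 + t) * E) with ((2 * ((bx - ox) * (t * dx) + (by0 - oy) * (t * dy)) + (t * dx * (t * dx) + t * dy * (t * dy)))
       - t * (2 * ((bx - ox) * dx + (by0 - oy) * dy) - E)) by (unfold E; ring).
    rewrite G1, G2. ring. }
  assert (Ht : t <> 0) by (intro H0; apply Hv; rewrite H0; ring).
  assert (Ht1 : 1 + t = 0).
  { apply Rmult_integral in G3 as [G3|G3]; [|contradiction].
    apply Rmult_integral in G3 as [G3|G3]; [contradiction|auto]. }
  assert (t = -1) by lra.
  split.
  - assert (cx = bx + vx) by (unfold vx; ring). rewrite H0, Vx, H. unfold dx. ring.
  - assert (cy = by0 + vy) by (unfold vy; ring). rewrite H0, Vy, H. unfold dy. ring.
Qed.

Lemma mm_nz_R (x0 y0 x1 y1 ox oy r : R) :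
  0 < r ->
  (ox - x0) ^ 2 + (oy - y0) ^ 2 = r ^ 2 ->
  (ox - x1) ^ 2 + (oy - y1) ^ 2 = r ^ 2 ->
  (x1 - x0) * (x1 - x0) + (y1 - y0) * (y1 - y0) <> 0 ->
  (x0 - ox + (x1 - ox)) * (x0 - ox + (x1 - ox)) + (y0 - oy + (y1 - oy)) * (y0 - oy + (y1 - oy)) <> 0 ->
  ((x1 - x0) * ((y0 - oy) + (y1 - oy)) - (y1 - y0) * ((x0 - ox) + (x1 - ox))) <> 0.
Proof.
  intros Hr N0 N1 He Ha.
  set (a := x0 - ox) in *. set (b := y0 - oy) in *. set (c := x1 - ox) in *. set (d := y1 - oy) in *.
  assert (Na : a * a + b * b = r * r) by (unfold a, b; nra).
  assert (Nc : c * c + d * d = r * r) by (unfold c, d; nra).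
  replace (x1 - x0) with (c - a) in * by (unfold a, c; ring).
  replace (y1 - y0) with (d - b) in * by (unfold b, d; ring).
  set (C := a * c + b * d).
  set (X := a * d - b * c).
  assert (Lag : C * C + X * X = (r * r) * (r * r)) by (unfold C, X; transitivity ((a*a+b*b)*(c*c+d*d)); [ring|rewrite Na, Nc; ring]).
  assert (E1 : (c - a) * (c - a) + (d - b) * (d - b) = 2 * (r * r) - 2 * C) by (unfold C; nra).
  assert (E2 : (a + c) * (a + c) + (b + d) * (b + d) = 2 * (r * r) + 2 * C) by (unfold C; nra).
  rewrite E1 in He. rewrite E2 in Ha.
  replace ((c - a) * (b + d) - (d - b) * (a + c)) with (- 2 * X) by (unfold X; ring).
  intro HX. assert (HX0 : X = 0) by lra. rewrite HX0 in Lag.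
  assert ((C - r * r) * (C + r * r) = 0) by nra.
  destruct (Rmult_integral _ _ H); [apply He|apply Ha]; lra.
Qed.

Section Main.
Variables (n : nat) (l : nat -> R) (P : config) (O : R * R) (r : R).
Hypothesis Hl : forall i, (i < n)%nat -> 0 < l i.
Hypothesis HL : in_L n l P.
Hypothesis Hoc : on_circle n P O r.
Hypothesis Hant : forall i, (i < n)%nat -> P (next n i) <> antipode O (P i).
Hypothesis Hnc : ~ collinear n P.

Lemma Hr : 0 < r.
Proof. destruct Hoc; auto. Qed.

Lemma Hcirc2 i : (i < n)%nat -> (fst O - fst (P i)) ^ 2 + (snd O - snd (P i)) ^ 2 = r ^ 2.
Proof.
  intros Hi. destruct Hoc as [H0 H]. pose proof (H i Hi) as E. unfold Defs.dist in E.
  rewrite <- E. rewrite pow2_sqrt; [reflexivity|]. apply Rplus_le_le_0_compat; apply pow2_ge_0.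
Qed.

Lemma Hcirc i : (i < n)%nat -> px P O i * px P O i + py P O i * py P O i = r * r.
Proof. intros Hi. pose proof (Hcirc2 i Hi). unfold px, py. nra. Qed.

Lemma Hel i : (i < n)%nat -> elen n P i <> 0.
Proof.
  intros Hi. pose proof (inL_sq n l P i HL Hi) as E. pose proof (Hl i Hi).
  unfold elen, ex, ey. unfold sqd in E. intro Z.
  assert (l i * l i = 0) by (rewrite <- E; rewrite <- Z; ring). nra.
Qed.

Lemma Hn0 : (0 < n)%nat.
Proof.
  destruct n as [|m]; [|lia]. exfalso. apply Hnc. exists 1, 0, 0. split; [left; lra|]. intros; lia.
Qed.

Lemma anti_sq i : (i < n)%nat ->
  (fst (P i) - fst O + (fst (P (next n i)) - fst O)) * (fst (P i) - fst O + (fst (P (next n i)) - fst O)) +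
  (snd (P i) - snd O + (snd (P (next n i)) - snd O)) * (snd (P i) - snd O + (snd (P (next n i)) - snd O)) <> 0.
Proof.
  intros Hi Z. apply (Hant i Hi).
  destruct (Rplus_sqr_eq_0 (fst (P i) - fst O + (fst (P (next n i)) - fst O))
     (snd (P i) - snd O + (snd (P (next n i)) - snd O))) as [A B]; [unfold Rsqr; exact Z|].
  unfold antipode. rewrite (surjective_pairing (P (next n i))). f_equal; lra.
Qed.

Lemma Hm i : (i < n)%nat -> mm n P O i <> 0.
Proof.
  intros Hi. unfold mm, px, py.
  pose proof (Hel i Hi) as He. unfold elen, ex, ey in *.
  intro Z. unfold Rdiv in Z. apply Rmult_integral in Z as [Z|Z].
  - revert Z. apply (mm_nz_R _ _ _ _ _ _ r Hr); auto using Hcirc2, next_lt, anti_sq.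
  - apply (Rinv_neq_0_compat _ He). exact Z.
Qed.

Lemma Heps i : (i < n)%nat -> eps n O P i * tan (alpha n O P i) = - / mm n P O i.
Proof.
  intros Hi. pose proof (Hel i Hi) as He. unfold elen, ex, ey in He.
  unfold eps, alpha, uangle, cross, vsub, mm, ex, ey, px, py, elen. simpl.
  apply eps_tan_R with r; auto using Hr, Hcirc2, next_lt, anti_sq.
Qed.

Lemma bif_iff : bifurcating n O P <-> Phi n P O (fun _ => 1) = 0.
Proof.
  unfold bifurcating, Phi.
  rewrite (rsum_ext n _ (fun i => - / mm n P O i)) by (intros; apply Heps; auto).
  rewrite (rsum_ext n (fun i => (1 + 1) / mm n P O i) (fun i => 2 * / mm n P O i)) by (intros; unfold Rdiv; ring).
  rewrite rsum_opp, rsum_scal. split; intro; lra.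
Qed.

Lemma Hn3 : (3 <= n)%nat.
Proof.
  destruct (Compare_dec.le_lt_dec 3 n) as [H|H]; [exact H|]. exfalso. apply Hnc.
  destruct (Req_dec (fst (P 0%nat)) (fst (P 1%nat))) as [E1|E1];
  [destruct (Req_dec (snd (P 0%nat)) (snd (P 1%nat))) as [E2|E2]|].
  - exists 1, 0, (fst (P 0%nat)). split; [left; lra|]. intros i Hi.
    assert (i = 0 \/ i = 1)%nat as [->| ->] by lia; lra.
  - set (a := snd (P 1%nat) - snd (P 0%nat)). set (b := fst (P 0%nat) - fst (P 1%nat)).
    exists a, b, (a * fst (P 0%nat) + b * snd (P 0%nat)). split; [left; unfold a; lra|].
    intros i Hi. assert (i = 0 \/ i = 1)%nat as [->| ->] by lia; [ring|unfold a, b; ring].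
  - set (a := snd (P 1%nat) - snd (P 0%nat)). set (b := fst (P 0%nat) - fst (P 1%nat)).
    exists a, b, (a * fst (P 0%nat) + b * snd (P 0%nat)). split; [right; unfold b; lra|].
    intros i Hi. assert (i = 0 \/ i = 1)%nat as [->| ->] by lia; [ring|unfold a, b; ring].
Qed.

Definition crossk k := (fst (P (next n k)) - fst (P k)) * (snd (P (next n (next n k))) - snd (P (next n k))) -
  (snd (P (next n k)) - snd (P k)) * (fst (P (next n (next n k))) - fst (P (next n k))).

Lemma Htri : exists k, (k < n)%nat /\ crossk k <> 0.
Proof.
  destruct (Classical_Prop.classic (exists k, (k < n)%nat /\ crossk k <> 0)) as [H|H]; [exact H|].
  exfalso. pose proof Hn3 as H3.
  assert (Eq : forall k, (k < n)%nat -> P k = P (next n (next n k))).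
  { intros k Hk. assert (Z : crossk k = 0).
    { destruct (Req_dec (crossk k) 0); auto. exfalso. apply H. eauto. }
    pose proof (next_lt n k Hk) as Hk1. pose proof (next_lt n _ Hk1) as Hk2.
    pose proof (Hcirc2 k Hk) as C0. pose proof (Hcirc2 _ Hk1) as C1. pose proof (Hcirc2 _ Hk2) as C2.
    pose proof (Hel k Hk) as E0. pose proof (Hel _ Hk1) as E1. unfold elen, ex, ey in E0, E1.
    destruct (circle3 (fst (P k)) (snd (P k)) (fst (P (next n k))) (snd (P (next n k)))
       (fst (P (next n (next n k)))) (snd (P (next n (next n k)))) (fst O) (snd O) (r * r)) as [A B].
    1-3: nra.
    1-2: auto.
    - exact Z.
    - rewrite (surjective_pairing (P k)), (surjective_pairing (P (next n (next n k)))). f_equal; auto. }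
  assert (All : forall k, (k < n)%nat -> P k = P 0%nat \/ P k = P 1%nat).
  { intro k. induction k as [k IH] using Wf_nat.lt_wf_ind. intros Hk.
    destruct k as [|[|k]]; auto.
    assert (E2 := Eq k ltac:(lia)). rewrite (next_S n k), (next_S n (S k)) in E2 by lia.
    rewrite <- E2. apply IH; lia. }
  apply Hnc.
  pose proof (Hel 0 ltac:(lia)) as E0. unfold elen, ex, ey in E0. rewrite (next_S n 0) in E0 by lia.
  set (a := snd (P 1%nat) - snd (P 0%nat)). set (b := fst (P 0%nat) - fst (P 1%nat)).
  exists a, b, (a * fst (P 0%nat) + b * snd (P 0%nat)). split.
  - destruct (Req_dec a 0); [right|left; auto]. intro Hb. apply E0. unfold a, b in *.
    replace (fst (P 1%nat)) with (fst (P 0%nat)) by lra. replace (snd (P 1%nat)) with (snd (P 0%nat)) by lra. ring.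
  - intros i Hi. destruct (All i Hi) as [-> | ->]; [ring|unfold a, b; ring].
Qed.

Lemma TAN w : tlin n P w -> tangent n l P w.
Proof.
  intros Hw. destruct Htri as [k [Hk Hc]].
  apply (tangent_gen n l P w k Hn3 HL Hel Hw Hk Hc).
Qed.

Lemma hq_val w q : hessQ n l P w q -> tlin n P w /\ q = qf n P O w.
Proof.
  intros [g [Ha Hd]]. destruct (adm_info n P O r Hcirc Hel Hn0 l g w Ha) as [A [_ [_ D]]].
  split; auto.
Qed.

Lemma hq_ex w : tlin n P w -> hessQ n l P w (qf n P O w).
Proof.
  intros Hw. destruct (TAN w Hw) as [g Ha]. exists g. split; auto.
  destruct (adm_info n P O r Hcirc Hel Hn0 l g w Ha) as [_ [_ [D _]]]. exact D.
Qed.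

Lemma tl_add w u : tlin n P w -> tlin n P u -> tlin n P (vadd w u).
Proof.
  intros Hw Hu i Hi. unfold vadd. simpl. pose proof (Hw i Hi). pose proof (Hu i Hi). lra.
Qed.

Lemma kern_iff w : hess_kernel n l P w <->
  (tlin n P w /\ forall u, tlin n P u -> rsum n (Tt n P O w u) = 0).
Proof.
  split.
  - intros [[g Ha] HK].
    assert (Hw : tlin n P w) by (destruct (adm_info n P O r Hcirc Hel Hn0 l g w Ha); auto).
    split; auto. intros u Hu.
    pose proof (HK u _ _ _ (hq_ex w Hw) (hq_ex u Hu) (hq_ex _ (tl_add w u Hw Hu))) as E.
    rewrite qf_polar in E by (apply Hcirc || apply Hel || apply Hn0). lra.
  - intros [Hw HT]. split; [apply TAN; auto|].
    intros u qw qu qwu A B C.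
    destruct (hq_val w qw A) as [_ ->]. destruct (hq_val u qu B) as [Hu ->].
    destruct (hq_val _ qwu C) as [_ ->].
    rewrite qf_polar. rewrite (HT u Hu). ring.
Qed.

Lemma orbit_tl (w : config) c : (forall i, (i < n)%nat -> w (next n i) = (fst (w i) - c * ey n P i, snd (w i) + c * ex n P i)) ->
  tlin n P w /\ forall i, (i < n)%nat -> phi n P w i = c.
Proof.
  intros H. split.
  - intros i Hi. rewrite (H i Hi). simpl. ring.
  - intros i Hi. unfold phi. rewrite (H i Hi). simpl.
    field_simplify_eq; [|apply Hel; auto]. unfold elen. ring.
Qed.

Lemma orbit_step w : orbit_tangent n P w -> exists c,
  forall i, (i < n)%nat -> w (next n i) = (fst (w i) - c * ey n P i, snd (w i) + c * ex n P i).
Proof.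
  intros [a [b [c H]]]. exists c. intros i Hi.
  rewrite (H i Hi), (H _ (next_lt n i Hi)). unfold ex, ey. simpl. f_equal; ring.
Qed.

Lemma phi_const_orbit w : tlin n P w -> (forall j, (j < n)%nat -> phi n P w j = phi n P w (next n j)) ->
  orbit_tangent n P w.
Proof.
  intros Hw Hs. set (c := phi n P w 0).
  assert (Pc : forall k, (k < n)%nat -> phi n P w k = c).
  { induction k; intros Hk; [reflexivity|]. rewrite <- IHk by lia.
    rewrite (Hs k) by lia. rewrite next_S by lia. reflexivity. }
  assert (W : forall k, (k < n)%nat -> w k = (fst (w 0%nat) - c * (snd (P k) - snd (P 0%nat)),
                                               snd (w 0%nat) + c * (fst (P k) - fst (P 0%nat)))).
  { induction k; intros Hk.
    - rewrite (surjective_pairing (w 0%nat)). f_equal; simpl; ring.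
    - destruct (tl_phi n P Hel w k Hw ltac:(lia)) as [A B].
      rewrite (next_S n k) in A, B by lia. rewrite Pc in A, B by lia.
      rewrite (surjective_pairing (w (S k))). rewrite IHk in A, B by lia. simpl in A, B.
      unfold ex, ey in A, B. rewrite (next_S n k) in A, B by lia.
      f_equal; lra. }
  exists (fst (w 0%nat) + c * snd (P 0%nat)), (snd (w 0%nat) - c * fst (P 0%nat)), c.
  intros i Hi. rewrite (W i Hi). f_equal; ring.
Qed.

Lemma w0_not_orbit : ~ orbit_tangent n P (w0 n P O).
Proof.
  intros [a [b [c H]]]. apply Hnc.
  set (Kx := a - c * snd O). set (Ky := b + c * fst O).
  assert (L : forall k, (k < n)%nat -> Kx * fst (P k) + Ky * snd (P k) = r * r + Kx * fst O + Ky * snd O).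
  { intros k Hk. pose proof (H k Hk) as E. unfold w0, uvec in E. injection E as E1 E2.
    pose proof (Hcirc k Hk) as N. unfold px, py in *. unfold Kx, Ky. nra. }
  exists Kx, Ky, (r * r + Kx * fst O + Ky * snd O). split; auto.
  destruct (Req_dec Kx 0) as [Hx|Hx]; [|left; auto].
  destruct (Req_dec Ky 0) as [Hy|Hy]; [|right; auto].
  exfalso. pose proof (L 0%nat Hn0) as E. rewrite Hx, Hy in E. pose proof Hr. nra.
Qed.

Theorem main_sec : morse_critical n l P <-> ~ bifurcating n O P.
Proof.
  split.
  - intros [Hcrit HM] Hb. apply bif_iff in Hb.
    apply w0_not_orbit. apply HM. apply kern_iff. split.
    + eapply w0_tl; eauto using Hcirc, Hel, Hn0, Hm.
    + intros u Hu. eapply w0_kernel; eauto using Hcirc, Hel, Hn0, Hm.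
  - intros Hnb. assert (H1 : Phi n P O (fun _ => 1) <> 0) by (intro E; apply Hnb; apply bif_iff; auto).
    split.
    + intros g w Ha. destruct (adm_info n P O r Hcirc Hel Hn0 l g w Ha) as [_ [D _]]. exact D.
    + intros w. rewrite kern_iff. split.
      * intros [Hw HT]. apply phi_const_orbit; auto.
        apply (phi_step n P O r Hcirc Hm Hr w Hw); auto.
        intros rho Hrho.
        assert (Hu : tlin n P (uvec n P O rho)) by (eapply uvec_tl; eauto using Hcirc, Hel, Hn0, Hm).
        pose proof (HT _ Hu) as E.
        rewrite (polar_sum n P O r Hcirc Hel Hn0 w _ Hw) in E. lra.
      * intros Ho. destruct (orbit_step w Ho) as [c Hc]. destruct (orbit_tl w c Hc) as [Hw Hp].
        split; auto. intros u Hu.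
        rewrite (polar_sum n P O r Hcirc Hel Hn0 w u Hw).
        rewrite (rsum_ext n _ (fun i => c * (sv P O u (next n i) - sv P O u i))) by (intros; rewrite Hp; auto).
        rewrite rsum_scal, (rsum_tele n (sv P O u)) by apply Hn0. ring.
Qed.

End Main.

Theorem mainTheorem10 (n : nat) (l : nat -> R) (P : config)
    (O : R * R) (r : R) :
  (forall i, (i < n)%nat -> 0 < l i) ->
  in_L n l P ->
  on_circle n P O r ->
  (forall i, (i < n)%nat -> P (next n i) <> antipode O (P i)) ->
  ~ collinear n P ->
  (morse_critical n l P <-> ~ bifurcating n O P).
Proof. intros. apply (main_sec n l P O r); auto. Qed.
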